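(* Let $\mathcal{E},\mathcal{F},\mathcal{G}\in\mathbb{R}[[u,v]]$ be formal power series of the normalized form given in the context (with constants $a_{2,0},a_{1,1}\in\mathbb{R}$, $a_{0,2}>0$), and fix real numbers $b_3,b_4,\dots$. Then for each integer $m\ge2$ there exists a unique $m$-th formal solution $(\mathcal{X}_{m+1},\mathcal{Y}_{m-1},\mathcal{Z}_m)$.
   Context: For $P\in\mathbb{R}[[u,v]]$ write $P=\sum_{k,l\ge0}\frac{P(k,l)}{k!\,l!}u^kv^l$; $P$ has order at least $n$ if $P(k,l)=0$ for $k+l<n$, and $\mathcal{O}_n$ denotes the ideal of such series. The normalized form: $\mathcal{E}=1+a_{2,0}^2u^2+2a_{2,0}a_{1,1}uv+(1+a_{1,1}^2)v^2+\mathcal{O}_3$, $\mathcal{F}=a_{2,0}a_{1,1}u^2+(a_{2,0}a_{0,2}+a_{1,1}^2+1)uv+a_{1,1}a_{0,2}v^2+\mathcal{O}_3$, $\mathcal{G}=(1+a_{1,1}^2)u^2+2a_{1,1}a_{0,2}uv+a_{0,2}^2v^2+\mathcal{O}_3$. For $m\ge2$, an $m$-th formal solution is a triple of polynomials $\mathcal{X}_{m+1}=u+\sum_{2\le k+l\le m+1}\frac{X(k,l)}{k!l!}u^kv^l$, $\mathcal{Y}_{m-1}=\sum_{1\le k+l\le m-1}\frac{Y(k,l)}{k!l!}u^kv^l$, $\mathcal{Z}_m=\sum_{2\le k+l\le m}\frac{Z(k,l)}{k!l!}u^kv^l$ with real coefficients, such that $Y(0,1)>0$, $Z(0,2)>0$,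 and, setting $\beta_{m+1}(t)=\sum_{j=3}^{m+1}\frac{b_j}{j!}t^j$ and $f^m=(\mathcal{X}_{m+1},\;\mathcal{X}_{m+1}\mathcal{Y}_{m-1}+\beta_{m+1}(\mathcal{Y}_{m-1}),\;\mathcal{Z}_m)$ (a triple of polynomials in $u,v$), $\mathcal{E}-f^m_u\cdot f^m_u\in\mathcal{O}_{m+1}$, $\mathcal{F}-f^m_u\cdot f^m_v\in\mathcal{O}_{m+1}$, $\mathcal{G}-f^m_v\cdot f^m_v\in\mathcal{O}_{m+1}$, where $\cdot$ is the Euclidean inner product and subscripts denote partial derivatives. *)

(* Defs.v *)
From Stdlib Require Import Reals Lra Lia Arith Factorial Binomial.
Open Scope R_scope.

(* A formal power series P in R[[u,v]] is represented by its Taylor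
   coefficients P(k,l), i.e. P = sum_{k,l} P(k,l)/(k! l!) u^k v^l,
   exactly as in the paper. *)
Definition ser := nat -> nat -> R.

Definition ocoef (P : ser) (k l : nat) : R :=
  P k l / (INR (fact k) * INR (fact l)).

Definition ser_add (P Q : ser) : ser := fun k l => P k l + Q k l.
Definition ser_scale (c : R) (P : ser) : ser := fun k l => c * P k l.
Definition ser_one : ser :=
  fun k l => match k, l with O, O => 1 | _, _ => 0 end.

(* product of series in Taylor-coefficient form (Leibniz rule) *)
Definition ser_mul (P Q : ser) : ser := fun k l =>
  sum_f_R0 (fun i => sum_f_R0 (fun j =>
     C k i * C l j * P i j * Q (k - i)%nat (l - j)%nat) l) k.

Fixpoint ser_pow (P : ser) (n : nat) : ser :=
  match n with O => ser_one | S n' => ser_mul P (ser_pow P n') end.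

Definition ser_du (P : ser) : ser := fun k l => P (S k) l.
Definition ser_dv (P : ser) : ser := fun k l => P k (S l).

Definition order_ge (n : nat) (P : ser) : Prop :=
  forall k l : nat, (k + l < n)%nat -> P k l = 0.

Definition ser_sub (P Q : ser) : ser := fun k l => P k l - Q k l.

Definition dot3 (f g : ser * ser * ser) : ser :=
  let '(f1, f2, f3) := f in let '(g1, g2, g3) := g in
  ser_add (ser_mul f1 g1) (ser_add (ser_mul f2 g2) (ser_mul f3 g3)).

Definition du3 (f : ser * ser * ser) : ser * ser * ser :=
  let '(f1, f2, f3) := f in (ser_du f1, ser_du f2, ser_du f3).
Definition dv3 (f : ser * ser * ser) : ser * ser * ser :=
  let '(f1, f2, f3) := f in (ser_dv f1, ser_dv f2, ser_dv f3).

(* beta_{m+1}(Y) = sum_{j=3}^{m+1} b_j / j! * Y^j   (m >= 2) *)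
Definition beta_comp (b : nat -> R) (m : nat) (Y : ser) : ser := fun k l =>
  sum_f_R0 (fun i => b (i + 3)%nat / INR (fact (i + 3)) *
                     ser_pow Y (i + 3) k l) (m - 2).

Definition fm (b : nat -> R) (m : nat) (X Y Z : ser) : ser * ser * ser :=
  (X, ser_add (ser_mul X Y) (beta_comp b m Y), Z).

Definition normalized (E F G : ser) (a20 a11 a02 : R) : Prop :=
  ocoef E 0 0 = 1 /\ ocoef E 1 0 = 0 /\ ocoef E 0 1 = 0 /\
  ocoef E 2 0 = a20 ^ 2 /\ ocoef E 1 1 = 2 * a20 * a11 /\
  ocoef E 0 2 = 1 + a11 ^ 2 /\
  ocoef F 0 0 = 0 /\ ocoef F 1 0 = 0 /\ ocoef F 0 1 = 0 /\
  ocoef F 2 0 = a20 * a11 /\ ocoef F 1 1 = a20 * a02 + a11 ^ 2 + 1 /\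
  ocoef F 0 2 = a11 * a02 /\
  ocoef G 0 0 = 0 /\ ocoef G 1 0 = 0 /\ ocoef G 0 1 = 0 /\
  ocoef G 2 0 = 1 + a11 ^ 2 /\ ocoef G 1 1 = 2 * a11 * a02 /\
  ocoef G 0 2 = a02 ^ 2.

Definition formal_solution (E F G : ser) (b : nat -> R) (m : nat)
    (X Y Z : ser) : Prop :=
  X 0%nat 0%nat = 0 /\ X 1%nat 0%nat = 1 /\ X 0%nat 1%nat = 0 /\
  (forall k l, (m + 1 < k + l)%nat -> X k l = 0) /\
  Y 0%nat 0%nat = 0 /\
  (forall k l, (m - 1 < k + l)%nat -> Y k l = 0) /\
  (forall k l, (k + l < 2)%nat -> Z k l = 0) /\
  (forall k l, (m < k + l)%nat -> Z k l = 0) /\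
  0 < Y 0%nat 1%nat /\ 0 < Z 0%nat 2%nat /\
  order_ge (m + 1) (ser_sub E (dot3 (du3 (fm b m X Y Z)) (du3 (fm b m X Y Z)))) /\
  order_ge (m + 1) (ser_sub F (dot3 (du3 (fm b m X Y Z)) (dv3 (fm b m X Y Z)))) /\
  order_ge (m + 1) (ser_sub G (dot3 (dv3 (fm b m X Y Z)) (dv3 (fm b m X Y Z)))).

(* Main.v *)
Require Import Defs.
From Stdlib Require Import Reals Lra Lia Arith Factorial Binomial FunctionalExtensionality.
Open Scope R_scope.

Lemma sum_rev (f : nat -> R) n :
  sum_f_R0 f n = sum_f_R0 (fun i => f (n - i)%nat) n.
Proof.
  revert f; induction n; intro f.
  - simpl. reflexivity.
  - rewrite (decomp_sum (fun i => f (S n - i)%nat) (S n)) by lia.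
    simpl pred. replace (S n - 0)%nat with (S n) by lia.
    rewrite (sum_eq (fun i => f (S n - S i)%nat) (fun i => f (n - i)%nat)) by (intros; f_equal; lia).
    rewrite <- IHn. simpl. ring.
Qed.

Lemma sum_zero (f : nat -> R) n : (forall i, (i <= n)%nat -> f i = 0) -> sum_f_R0 f n = 0.
Proof.
  intro H; induction n; simpl.
  - apply H; lia.
  - rewrite IHn by (intros; apply H; lia). rewrite H by lia. ring.
Qed.

Lemma sum_one (f : nat -> R) n j : (j <= n)%nat -> (forall i, (i <= n)%nat -> i <> j -> f i = 0) ->
  sum_f_R0 f n = f j.
Proof.
  intros Hj H; induction n; simpl.
  - replace j with 0%nat by lia. reflexivity.
  - destruct (Nat.eq_dec j (S n)) as [->|Hne].
    + rewrite sum_zero. ring. intros; apply H; lia.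
    + rewrite IHn by (try lia; intros; apply H; lia). rewrite (H (S n)) by lia. ring.
Qed.

Lemma ser_ext (P Q : ser) : (forall k l, P k l = Q k l) -> P = Q.
Proof. intro H. extensionality k. extensionality l. apply H. Qed.

Lemma ser_mul_comm P Q : ser_mul P Q = ser_mul Q P.
Proof.
  apply ser_ext; intros k l; unfold ser_mul.
  rewrite sum_rev. apply sum_eq; intros i Hi.
  rewrite sum_rev. apply sum_eq; intros j Hj.
  rewrite (pascal_step1 k i) by lia. rewrite (pascal_step1 l j) by lia.
  replace (k - (k - i))%nat with i by lia. replace (l - (l - j))%nat with j by lia.
  ring.
Qed.

Lemma ser_mul_addl P Q R' : ser_mul (ser_add P Q) R' = ser_add (ser_mul P R') (ser_mul Q R').
Proof.
  apply ser_ext; intros k l; unfold ser_mul, ser_add.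
  rewrite <- sum_plus. apply sum_eq; intros i Hi.
  rewrite <- sum_plus. apply sum_eq; intros j Hj. ring.
Qed.

Lemma ser_mul_addr P Q R' : ser_mul R' (ser_add P Q) = ser_add (ser_mul R' P) (ser_mul R' Q).
Proof. rewrite !(ser_mul_comm R'). apply ser_mul_addl. Qed.

Lemma ser_mul_subl P Q R' : ser_mul (ser_sub P Q) R' = ser_sub (ser_mul P R') (ser_mul Q R').
Proof.
  apply ser_ext; intros k l; unfold ser_mul, ser_sub.
  rewrite <- minus_sum. apply sum_eq; intros i Hi.
  rewrite <- minus_sum. apply sum_eq; intros j Hj. ring.
Qed.

Lemma ser_mul_subr P Q R' : ser_mul R' (ser_sub P Q) = ser_sub (ser_mul R' P) (ser_mul R' Q).
Proof. rewrite !(ser_mul_comm R'). apply ser_mul_subl. Qed.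

Lemma ser_mul_scalel c P Q : ser_mul (ser_scale c P) Q = ser_scale c (ser_mul P Q).
Proof.
  apply ser_ext; intros k l; unfold ser_mul, ser_scale.
  rewrite scal_sum. apply sum_eq; intros i Hi.
  rewrite (Rmult_comm _ c), scal_sum. apply sum_eq; intros j Hj. ring.
Qed.

Lemma ser_mul_one P : ser_mul ser_one P = P.
Proof.
  apply ser_ext; intros k l; unfold ser_mul.
  rewrite (sum_one _ k 0).
  2: lia.
  2: { intros i Hi Hne; apply sum_zero; intros j Hj.
       unfold ser_one; destruct i; [lia|]. ring. }
  rewrite (sum_one _ l 0).
  2: lia.
  2: { intros j Hj Hne; unfold ser_one; destruct j; [lia|]. ring. }
  unfold ser_one. rewrite !Nat.sub_0_r. unfold C. rewrite !Nat.sub_0_r. simpl. field.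
  split; apply INR_fact_neq_0.
Qed.

Lemma ser_mul_one_r P : ser_mul P ser_one = P.
Proof. rewrite ser_mul_comm; apply ser_mul_one. Qed.

Lemma order_mul p q P Q : order_ge p P -> order_ge q Q -> order_ge (p + q) (ser_mul P Q).
Proof.
  intros HP HQ k l Hkl; unfold ser_mul.
  apply sum_zero; intros i Hi; apply sum_zero; intros j Hj.
  destruct (Nat.lt_ge_cases (i + j) p).
  - rewrite (HP i j) by lia. ring.
  - rewrite (HQ (k - i)%nat (l - j)%nat) by lia. ring.
Qed.

Lemma order_weak n m P : (m <= n)%nat -> order_ge n P -> order_ge m P.
Proof. intros H HP k l Hkl; apply HP; lia. Qed.

Lemma order_add n P Q : order_ge n P -> order_ge n Q -> order_ge n (ser_add P Q).
Proof. intros HP HQ k l H; unfold ser_add; rewrite HP, HQ by lia; ring. Qed.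

Lemma order_sub n P Q : order_ge n P -> order_ge n Q -> order_ge n (ser_sub P Q).
Proof. intros HP HQ k l H; unfold ser_sub; rewrite HP, HQ by lia; ring. Qed.

Lemma order_scale n c P : order_ge n P -> order_ge n (ser_scale c P).
Proof. intros HP k l H; unfold ser_scale; rewrite HP by lia; ring. Qed.

Lemma order_du n P : order_ge (S n) P -> order_ge n (ser_du P).
Proof. intros HP k l H; unfold ser_du; apply HP; lia. Qed.

Lemma order_dv n P : order_ge (S n) P -> order_ge n (ser_dv P).
Proof. intros HP k l H; unfold ser_dv; apply HP; lia. Qed.

Lemma order_0 P : order_ge 0 P.
Proof. intros k l H; lia. Qed.

Definition eqm n (P Q : ser) := order_ge n (ser_sub P Q).

Lemma eqm_refl n P : eqm n P P.
Proof. intros k l _; unfold ser_sub; ring. Qed.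
Lemma eqm_sym n P Q : eqm n P Q -> eqm n Q P.
Proof. intros H k l Hk; unfold ser_sub; specialize (H k l Hk); unfold ser_sub in H; lra. Qed.
Lemma eqm_trans n P Q R' : eqm n P Q -> eqm n Q R' -> eqm n P R'.
Proof. intros H1 H2 k l Hk; specialize (H1 k l Hk); specialize (H2 k l Hk); unfold ser_sub in *; lra. Qed.
Lemma eqm_weak n m P Q : (m <= n)%nat -> eqm n P Q -> eqm m P Q.
Proof. intros; eapply order_weak; eauto. Qed.
Lemma eqm_add n P P' Q Q' : eqm n P P' -> eqm n Q Q' -> eqm n (ser_add P Q) (ser_add P' Q').
Proof. intros H1 H2 k l Hk; specialize (H1 k l Hk); specialize (H2 k l Hk); unfold ser_sub, ser_add in *; lra. Qed.
Lemma eqm_du n P Q : eqm (S n) P Q -> eqm n (ser_du P) (ser_du Q).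
Proof. intros H k l Hk; apply (H (S k) l); lia. Qed.
Lemma eqm_dv n P Q : eqm (S n) P Q -> eqm n (ser_dv P) (ser_dv Q).
Proof. intros H k l Hk; apply (H k (S l)); lia. Qed.
Lemma eqm_eq n P Q : P = Q -> eqm n P Q.
Proof. intros ->; apply eqm_refl. Qed.

Lemma eqm_order n P Q : eqm n P Q -> order_ge n Q -> order_ge n P.
Proof. intros H1 H2 k l Hk; specialize (H1 k l Hk); specialize (H2 k l Hk); unfold ser_sub in *; lra. Qed.

Lemma eqm_zero n P Q : order_ge n P -> order_ge n Q -> eqm n P Q.
Proof. intros; apply order_sub; auto. Qed.

Lemma cterm N A A0 D D0 a d e c :
  eqm a A A0 -> order_ge d D -> order_ge e A0 -> eqm c D D0 ->
  (N <= a + d)%nat -> (N <= e + c)%nat -> eqm N (ser_mul A D) (ser_mul A0 D0).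
Proof.
  intros H1 H2 H3 H4 Ha Hb.
  apply eqm_trans with (ser_mul A0 D).
  - unfold eqm. rewrite <- ser_mul_subl. eapply order_weak; [|apply order_mul; eauto]. lia.
  - unfold eqm. rewrite <- ser_mul_subr. eapply order_weak; [|apply order_mul; eauto]. lia.
Qed.

Definition ser0 : ser := fun _ _ => 0.
Definition lin (a b : R) : ser := fun k l =>
  match k, l with 1%nat, 0%nat => a | 0%nat, 1%nat => b | _, _ => 0 end.
Definition su : ser := lin 1 0.
Definition sv : ser := lin 0 1.
Definition Z2 (a20 a11 a02 : R) : ser := fun k l =>
  match k, l with 2%nat, 0%nat => a20 | 1%nat, 1%nat => a11 | 0%nat, 2%nat => a02 | _, _ => 0 end.

Lemma C_1 k : (1 <= k)%nat -> C k 1 = INR k.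
Proof.
  intro Hk; destruct k. lia.
  unfold C. replace (S k - 1)%nat with k by lia. rewrite fact_simpl, mult_INR. simpl (fact 1).
  simpl (INR 1). field. apply INR_fact_neq_0.
Qed.

Definition pt (i0 j0 : nat) : ser := fun k l => if (Nat.eqb k i0 && Nat.eqb l j0)%bool then 1 else 0.

Lemma mul_pt i0 j0 P k l : (i0 <= k)%nat -> (j0 <= l)%nat ->
  ser_mul (pt i0 j0) P k l = C k i0 * C l j0 * P (k - i0)%nat (l - j0)%nat.
Proof.
  intros Hi Hj; unfold ser_mul.
  rewrite (sum_one _ k i0 Hi).
  2: { intros i Hi' Hne; apply sum_zero; intros j Hj'. unfold pt.
       destruct (Nat.eqb_spec i i0); [lia|]. simpl. ring. }
  rewrite (sum_one _ l j0 Hj).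
  2: { intros j Hj' Hne. unfold pt.
       destruct (Nat.eqb_spec i0 i0); [|lia]. destruct (Nat.eqb_spec j j0); [lia|]. simpl. ring. }
  unfold pt. rewrite !Nat.eqb_refl. simpl. ring.
Qed.

Lemma mul_pt0 i0 j0 P k l : ((k < i0) \/ (l < j0))%nat -> ser_mul (pt i0 j0) P k l = 0.
Proof.
  intros H; unfold ser_mul. apply sum_zero; intros i Hi; apply sum_zero; intros j Hj.
  unfold pt. destruct (Nat.eqb_spec i i0); destruct (Nat.eqb_spec j j0); simpl; try ring. lia.
Qed.

Lemma lin_pt a b : lin a b = ser_add (ser_scale a (pt 1 0)) (ser_scale b (pt 0 1)).
Proof.
  apply ser_ext; intros k l; unfold lin, ser_add, ser_scale, pt.
  destruct k as [|[|k]]; destruct l as [|[|l]]; simpl; ring.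
Qed.

Lemma mul_lin a b P k l :
  ser_mul (lin a b) P k l = a * INR k * P (k - 1)%nat l + b * INR l * P k (l - 1)%nat.
Proof.
  rewrite lin_pt, ser_mul_addl, !ser_mul_scalel. unfold ser_add, ser_scale.
  destruct k.
  - rewrite mul_pt0 by lia. destruct l.
    + rewrite mul_pt0 by lia. simpl. ring.
    + rewrite mul_pt by lia. rewrite C_1 by lia. unfold C at 1. simpl. field.
  - rewrite (mul_pt 1 0) by lia. rewrite C_1 by lia. destruct l.
    + rewrite mul_pt0 by lia. unfold C. simpl. rewrite !Nat.sub_0_r. field; try apply INR_fact_neq_0.
    + rewrite mul_pt by lia. rewrite C_1 by lia. unfold C. simpl. rewrite !Nat.sub_0_r. field;
      try apply INR_fact_neq_0.
    split; apply (INR_fact_neq_0 (S _)).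
Qed.

Lemma mul_su P k l : ser_mul su P k l = INR k * P (k - 1)%nat l.
Proof. unfold su; rewrite mul_lin; ring. Qed.
Lemma mul_sv P k l : ser_mul sv P k l = INR l * P k (l - 1)%nat.
Proof. unfold sv; rewrite mul_lin; ring. Qed.

Lemma du_su : ser_du su = ser_one.
Proof. apply ser_ext; intros [|[|[|k]]] [|[|[|l]]]; reflexivity. Qed.
Lemma dv_su : ser_dv su = ser0.
Proof. apply ser_ext; intros [|[|[|k]]] [|[|[|l]]]; reflexivity. Qed.
Lemma du_sv : ser_du sv = ser0.
Proof. apply ser_ext; intros [|[|[|k]]] [|[|[|l]]]; reflexivity. Qed.
Lemma dv_sv : ser_dv sv = ser_one.
Proof. apply ser_ext; intros [|[|[|k]]] [|[|[|l]]]; reflexivity. Qed.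
Lemma du_Z2 a20 a11 a02 : ser_du (Z2 a20 a11 a02) = lin a20 a11.
Proof. apply ser_ext; intros [|[|[|k]]] [|[|[|l]]]; reflexivity. Qed.
Lemma dv_Z2 a20 a11 a02 : ser_dv (Z2 a20 a11 a02) = lin a11 a02.
Proof. apply ser_ext; intros [|[|[|k]]] [|[|[|l]]]; reflexivity. Qed.

Lemma du_uv : ser_du (ser_mul su sv) = sv.
Proof.
  apply ser_ext; intros k l; unfold ser_du; rewrite mul_su.
  replace (S k - 1)%nat with k by lia.
  unfold sv, lin. destruct k as [|[|[|k]]]; destruct l as [|[|[|l]]]; simpl; ring.
Qed.
Lemma dv_uv : ser_dv (ser_mul su sv) = su.
Proof.
  apply ser_ext; intros k l; unfold ser_dv; rewrite mul_su.
  unfold sv, su, lin. destruct k as [|[|[|k]]]; destruct l as [|[|[|l]]]; simpl; ring.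
Qed.

Lemma order_lin a b : order_ge 1 (lin a b).
Proof. intros [|k] [|l] H; try lia; reflexivity. Qed.
Lemma order_ser0 n : order_ge n ser0.
Proof. intros k l _; reflexivity. Qed.
Lemma order_Z2 a20 a11 a02 : order_ge 2 (Z2 a20 a11 a02).
Proof. intros [|[|k]] [|[|l]] H; try lia; reflexivity. Qed.
Lemma order_su : order_ge 1 su. Proof. apply order_lin. Qed.
Lemma order_sv : order_ge 1 sv. Proof. apply order_lin. Qed.

Lemma pow_order Y j : order_ge 1 Y -> order_ge j (ser_pow Y j).
Proof.
  intro HY; induction j; simpl.
  - apply order_0.
  - replace (S j) with (1 + j)%nat by lia. apply order_mul; auto.
Qed.

Lemma sub_mul_split Y Y' A A' :
  ser_sub (ser_mul Y A) (ser_mul Y' A') =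
  ser_add (ser_mul Y (ser_sub A A')) (ser_mul (ser_sub Y Y') A').
Proof.
  rewrite ser_mul_subr, ser_mul_subl. apply ser_ext; intros k l.
  unfold ser_add, ser_sub. ring.
Qed.

Lemma pow_diff Y Y' p j : order_ge 1 Y -> order_ge 1 Y' -> order_ge p (ser_sub Y Y') ->
  order_ge (p + j) (ser_sub (ser_pow Y (S j)) (ser_pow Y' (S j))).
Proof.
  intros H1 H2 H3; induction j.
  - simpl. rewrite !ser_mul_one_r. replace (p + 0)%nat with p by lia. auto.
  - change (ser_pow Y (S (S j))) with (ser_mul Y (ser_pow Y (S j))).
    change (ser_pow Y' (S (S j))) with (ser_mul Y' (ser_pow Y' (S j))).
    rewrite sub_mul_split. apply order_add.
    + replace (p + S j)%nat with (1 + (p + j))%nat by lia. apply order_mul; auto.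
    + replace (p + S j)%nat with (p + S j)%nat by lia. apply order_mul; auto.
      apply pow_order; auto.
Qed.

Lemma beta_order b m Y : order_ge 1 Y -> order_ge 3 (beta_comp b m Y).
Proof.
  intros HY k l Hkl; unfold beta_comp. apply sum_zero; intros i Hi.
  rewrite (pow_order Y (i + 3) HY) by lia. ring.
Qed.

Lemma beta_diff b m Y Y' p : order_ge 1 Y -> order_ge 1 Y' -> order_ge p (ser_sub Y Y') ->
  order_ge (p + 2) (ser_sub (beta_comp b m Y) (beta_comp b m Y')).
Proof.
  intros H1 H2 H3 k l Hkl; unfold ser_sub, beta_comp. rewrite <- minus_sum.
  apply sum_zero; intros i Hi.
  pose proof (pow_diff Y Y' p (i + 2) H1 H2 H3 k l) as HH.
  unfold ser_sub in HH. replace (i + 3)%nat with (S (i + 2)) by lia.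
  rewrite <- Rmult_minus_distr_l, HH by lia. ring.
Qed.

Lemma du_add P Q : ser_du (ser_add P Q) = ser_add (ser_du P) (ser_du Q).
Proof. reflexivity. Qed.
Lemma dv_add P Q : ser_dv (ser_add P Q) = ser_add (ser_dv P) (ser_dv Q).
Proof. reflexivity. Qed.

Lemma mul_expand A D B D' :
  ser_mul (ser_add A D) (ser_add B D') =
  ser_add (ser_mul A B) (ser_add (ser_mul A D') (ser_add (ser_mul D B) (ser_mul D D'))).
Proof.
  rewrite ser_mul_addl, !ser_mul_addr. apply ser_ext; intros k l; unfold ser_add; ring.
Qed.

Lemma add_sub_ser P' P : P' = ser_add P (ser_sub P' P).
Proof. apply ser_ext; intros k l; unfold ser_add, ser_sub; ring. Qed.

Lemma eqm_add_r n P Q R' : eqm n Q R' -> eqm n (ser_add P Q) (ser_add P R').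
Proof. intro H; apply eqm_add; auto using eqm_refl. Qed.

Lemma eqm_mul_order N A B a b : order_ge a A -> order_ge b B -> (N <= a + b)%nat ->
  eqm N (ser_mul A B) ser0.
Proof. intros; apply eqm_zero; [eapply order_weak; [|apply order_mul; eauto]; lia| apply order_ser0]. Qed.

Lemma gen_comp N A D B D' A0 D0' B0 D0 :
  eqm N (ser_mul A D') (ser_mul A0 D0') -> eqm N (ser_mul B D) (ser_mul B0 D0) ->
  eqm N (ser_mul D D') ser0 ->
  eqm N (ser_add (ser_mul A D') (ser_add (ser_mul D B) (ser_mul D D')))
        (ser_add (ser_mul A0 D0') (ser_mul B0 D0)).
Proof.
  intros H1 H2 H3. rewrite (ser_mul_comm D B).
  eapply eqm_trans; [apply eqm_add; [exact H1| apply eqm_add; [exact H2|exact H3]]|].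
  apply eqm_eq, ser_ext; intros k l; unfold ser_add, ser0; ring.
Qed.

Lemma regroup a r1 b' r2 c r3 :
  ser_add (ser_add a r1) (ser_add (ser_add b' r2) (ser_add c r3)) =
  ser_add (ser_add a (ser_add b' c)) (ser_add r1 (ser_add r2 r3)).
Proof. apply ser_ext; intros k l; unfold ser_add; ring. Qed.

Ltac ct := eapply cterm; [eassumption|eassumption|eassumption|eassumption|lia|lia].

Section Expand.
Variables (b : nat -> R) (m n : nat) (a20 a11 a02 : R) (X Y Z dX dY dZ : ser).
Hypothesis Hn : (3 <= n)%nat.
Hypothesis HX : eqm 3 X su.
Hypothesis HY : eqm 2 Y sv.
Hypothesis HZ : eqm 3 Z (Z2 a20 a11 a02).
Hypothesis HdX : order_ge (n+1) dX.
Hypothesis HdY : order_ge (n-1) dY.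
Hypothesis HdZ : order_ge n dZ.

Let W := ser_mul su dY.
Let A2 := ser_add (ser_mul X Y) (beta_comp b m Y).
Let A2' := ser_add (ser_mul (ser_add X dX) (ser_add Y dY)) (beta_comp b m (ser_add Y dY)).
Let D2 := ser_sub A2' A2.

Lemma oX : order_ge 1 X.
Proof. eapply eqm_order; [eapply eqm_weak; [|exact HX]; lia| apply order_su]. Qed.
Lemma oY : order_ge 1 Y.
Proof. eapply eqm_order; [eapply eqm_weak; [|exact HY]; lia| apply order_sv]. Qed.
Lemma oYd : order_ge 1 (ser_add Y dY).
Proof. apply order_add; [apply oY| eapply order_weak; [|exact HdY]; lia]. Qed.
Lemma oW : order_ge n W.
Proof. replace n with (1 + (n-1))%nat at 1 by lia. apply order_mul; auto using order_su. Qed.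

Lemma D2_eq : eqm (n+1) D2 W.
Proof.
  assert (E : D2 = ser_add (ser_add (ser_mul X dY) (ser_add (ser_mul dX Y) (ser_mul dX dY)))
                   (ser_sub (beta_comp b m (ser_add Y dY)) (beta_comp b m Y))).
  { unfold D2, A2', A2. rewrite mul_expand. apply ser_ext; intros k l; unfold ser_add, ser_sub; ring. }
  rewrite E.
  replace W with (ser_add (ser_add W (ser_add ser0 ser0)) ser0)
    by (apply ser_ext; intros k l; unfold ser_add, ser0; ring).
  apply eqm_add; [apply eqm_add; [|apply eqm_add]|].
  - unfold W. eapply cterm; [exact HX| exact HdY | apply order_su | apply eqm_refl | lia | ].
    instantiate (1 := (n+1)%nat). lia.
  - eapply eqm_mul_order; [exact HdX | apply oY | lia].
  - eapply eqm_mul_order; [exact HdX | exact HdY | lia].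
  - apply eqm_zero; [|apply order_ser0].
    replace (n+1)%nat with ((n-1) + 2)%nat by lia. apply beta_diff; auto using oY, oYd.
    intros k l Hkl; unfold ser_sub, ser_add. rewrite HdY by lia. ring.
Qed.

Lemma A2_eq : eqm 3 A2 (ser_mul su sv).
Proof.
  unfold A2. replace (ser_mul su sv) with (ser_add (ser_mul su sv) ser0)
    by (apply ser_ext; intros k l; unfold ser_add, ser0; ring).
  apply eqm_add.
  - eapply cterm; [exact HX | apply oY | apply order_su | exact HY | lia | lia].
  - apply eqm_zero; [apply beta_order, oY | apply order_ser0].
Qed.

Lemma oD2 : order_ge n D2.
Proof.
  eapply eqm_order; [eapply eqm_weak; [|apply D2_eq]; lia | apply oW].
Qed.

Let L1 := lin a20 a11.
Let L2 := lin a11 a02.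
Let f := fm b m X Y Z.
Let f' := fm b m (ser_add X dX) (ser_add Y dY) (ser_add Z dZ).

Lemma hXu : eqm 2 (ser_du X) ser_one.
Proof. rewrite <- du_su. apply eqm_du; exact HX. Qed.
Lemma hXv : eqm 2 (ser_dv X) ser0.
Proof. rewrite <- dv_su. apply eqm_dv; exact HX. Qed.
Lemma hAu : eqm 2 (ser_du A2) sv.
Proof. rewrite <- du_uv. apply eqm_du; exact A2_eq. Qed.
Lemma hAv : eqm 2 (ser_dv A2) su.
Proof. rewrite <- dv_uv. apply eqm_dv; exact A2_eq. Qed.
Lemma hZu : eqm 2 (ser_du Z) L1.
Proof. unfold L1; rewrite <- (du_Z2 a20 a11 a02). apply eqm_du; exact HZ. Qed.
Lemma hZv : eqm 2 (ser_dv Z) L2.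
Proof. unfold L2; rewrite <- (dv_Z2 a20 a11 a02). apply eqm_dv; exact HZ. Qed.
Lemma hDu : eqm n (ser_du D2) (ser_du W).
Proof. apply eqm_du. replace (S n) with (n+1)%nat by lia. apply D2_eq. Qed.
Lemma hDv : eqm n (ser_dv D2) (ser_dv W).
Proof. apply eqm_dv. replace (S n) with (n+1)%nat by lia. apply D2_eq. Qed.
Lemma oDu : order_ge (n-1) (ser_du D2).
Proof. apply order_du. replace (S (n-1)) with n by lia. apply oD2. Qed.
Lemma oDv : order_ge (n-1) (ser_dv D2).
Proof. apply order_dv. replace (S (n-1)) with n by lia. apply oD2. Qed.
Lemma odXu : order_ge n (ser_du dX).
Proof. apply order_du. replace (S n) with (n+1)%nat by lia. exact HdX. Qed.
Lemma odXv : order_ge n (ser_dv dX).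
Proof. apply order_dv. replace (S n) with (n+1)%nat by lia. exact HdX. Qed.
Lemma odZu : order_ge (n-1) (ser_du dZ).
Proof. apply order_du. replace (S (n-1)) with n by lia. exact HdZ. Qed.
Lemma odZv : order_ge (n-1) (ser_dv dZ).
Proof. apply order_dv. replace (S (n-1)) with n by lia. exact HdZ. Qed.

Lemma f'_eq : f' = (ser_add X dX, ser_add A2 D2, ser_add Z dZ).
Proof. unfold f', fm. f_equal. f_equal. apply add_sub_ser. Qed.
Lemma f_eq : f = (X, A2, Z).
Proof. reflexivity. Qed.

Ltac sq := eapply eqm_mul_order; [eassumption|eassumption|lia].

Lemma expE : eqm (n+1) (dot3 (du3 f') (du3 f'))
  (ser_add (dot3 (du3 f) (du3 f))
    (ser_add (ser_add (ser_mul ser_one (ser_du dX)) (ser_mul ser_one (ser_du dX)))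
      (ser_add (ser_add (ser_mul sv (ser_du W)) (ser_mul sv (ser_du W)))
               (ser_add (ser_mul L1 (ser_du dZ)) (ser_mul L1 (ser_du dZ)))))).
Proof.
  rewrite f'_eq, f_eq. unfold du3, dot3. rewrite !du_add, !mul_expand, regroup.
  apply eqm_add_r.
  pose proof hXu. pose proof hAu. pose proof hZu. pose proof hDu. pose proof oDu.
  pose proof odXu. pose proof odZu. pose proof (order_0 ser_one). pose proof order_sv.
  pose proof (order_lin a20 a11) as oL1. fold L1 in oL1.
  pose proof (eqm_refl (n+1) (ser_du dX)). pose proof (eqm_refl (n+1) (ser_du dZ)).
  apply eqm_add; [|apply eqm_add]; apply gen_comp; try ct; try sq.
Qed.

Lemma expF : eqm (n+1) (dot3 (du3 f') (dv3 f'))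
  (ser_add (dot3 (du3 f) (dv3 f))
    (ser_add (ser_add (ser_mul ser_one (ser_dv dX)) (ser_mul ser0 (ser_du dX)))
      (ser_add (ser_add (ser_mul sv (ser_dv W)) (ser_mul su (ser_du W)))
               (ser_add (ser_mul L1 (ser_dv dZ)) (ser_mul L2 (ser_du dZ)))))).
Proof.
  rewrite f'_eq, f_eq. unfold du3, dv3, dot3. rewrite !du_add, !dv_add, !mul_expand, regroup.
  apply eqm_add_r.
  pose proof hXu. pose proof hAu. pose proof hZu. pose proof hDu. pose proof oDu.
  pose proof hXv. pose proof hAv. pose proof hZv. pose proof hDv. pose proof oDv.
  pose proof odXu. pose proof odZu. pose proof odXv. pose proof odZv.
  pose proof (order_0 ser_one). pose proof order_sv. pose proof order_su.
  pose proof (order_ser0 (n+1)).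
  pose proof (order_lin a20 a11) as oL1. fold L1 in oL1.
  pose proof (order_lin a11 a02) as oL2. fold L2 in oL2.
  pose proof (eqm_refl (n+1) (ser_du dX)). pose proof (eqm_refl (n+1) (ser_du dZ)).
  pose proof (eqm_refl (n+1) (ser_dv dX)). pose proof (eqm_refl (n+1) (ser_dv dZ)).
  apply eqm_add; [|apply eqm_add]; apply gen_comp; try ct; try sq.
Qed.

Lemma expG : eqm (n+1) (dot3 (dv3 f') (dv3 f'))
  (ser_add (dot3 (dv3 f) (dv3 f))
    (ser_add (ser_add (ser_mul ser0 (ser_dv dX)) (ser_mul ser0 (ser_dv dX)))
      (ser_add (ser_add (ser_mul su (ser_dv W)) (ser_mul su (ser_dv W)))
               (ser_add (ser_mul L2 (ser_dv dZ)) (ser_mul L2 (ser_dv dZ)))))).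
Proof.
  rewrite f'_eq, f_eq. unfold dv3, dot3. rewrite !dv_add, !mul_expand, regroup.
  apply eqm_add_r.
  pose proof hXv. pose proof hAv. pose proof hZv. pose proof hDv. pose proof oDv.
  pose proof odXv. pose proof odZv. pose proof order_su.
  pose proof (order_ser0 (n+1)).
  pose proof (order_lin a11 a02) as oL2. fold L2 in oL2.
  pose proof (eqm_refl (n+1) (ser_dv dX)). pose proof (eqm_refl (n+1) (ser_dv dZ)).
  apply eqm_add; [|apply eqm_add]; apply gen_comp; try ct; try sq.
Qed.
End Expand.

Lemma mul_ser0 P : ser_mul ser0 P = ser0.
Proof. apply ser_ext; intros k l; unfold ser_mul. apply sum_zero; intros; apply sum_zero; intros.
  unfold ser0; ring. Qed.

Section Coef.
Variables (a20 a11 a02 : R) (dX dY dZ : ser).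
Let W := ser_mul su dY.
Let L1 := lin a20 a11.
Let L2 := lin a11 a02.

Lemma cE k l :
  ser_add (ser_add (ser_mul ser_one (ser_du dX)) (ser_mul ser_one (ser_du dX)))
      (ser_add (ser_add (ser_mul sv (ser_du W)) (ser_mul sv (ser_du W)))
               (ser_add (ser_mul L1 (ser_du dZ)) (ser_mul L1 (ser_du dZ)))) k l
  = 2 * (dX (S k) l + INR l * INR (S k) * dY k (l-1)%nat + a20 * INR k * dZ k l
         + a11 * INR l * dZ (S k) (l-1)%nat).
Proof.
  unfold ser_add. rewrite ser_mul_one. rewrite mul_sv. unfold L1. rewrite mul_lin.
  unfold ser_du, W. rewrite mul_su. replace (S k - 1)%nat with k by lia.
  destruct k as [|k]; [rewrite INR_0; ring|]. replace (S k - 1)%nat with k by lia. ring.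
Qed.

Lemma cF k l :
  ser_add (ser_add (ser_mul ser_one (ser_dv dX)) (ser_mul ser0 (ser_du dX)))
      (ser_add (ser_add (ser_mul sv (ser_dv W)) (ser_mul su (ser_du W)))
               (ser_add (ser_mul L1 (ser_dv dZ)) (ser_mul L2 (ser_du dZ)))) k l
  = dX k (S l) + INR l * INR k * dY (k-1)%nat l + INR k * INR k * dY (k-1)%nat l
    + a20 * INR k * dZ (k-1)%nat (S l) + a11 * INR l * dZ k l + a11 * INR k * dZ k l
    + a02 * INR l * dZ (S k) (l-1)%nat.
Proof.
  unfold ser_add. rewrite ser_mul_one, mul_ser0. rewrite mul_sv, mul_su. unfold L1, L2.
  rewrite !mul_lin. unfold ser_du, ser_dv, W, ser0. rewrite !mul_su.
  destruct k as [|k]; destruct l as [|l]; rewrite ?INR_0;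
  repeat (rewrite ?Nat.sub_succ, ?Nat.sub_0_r); ring.
Qed.

Lemma cG k l :
  ser_add (ser_add (ser_mul ser0 (ser_dv dX)) (ser_mul ser0 (ser_dv dX)))
      (ser_add (ser_add (ser_mul su (ser_dv W)) (ser_mul su (ser_dv W)))
               (ser_add (ser_mul L2 (ser_dv dZ)) (ser_mul L2 (ser_dv dZ)))) k l
  = 2 * (INR k * INR (k-1) * dY (k-2)%nat (S l) + a11 * INR k * dZ (k-1)%nat (S l)
         + a02 * INR l * dZ k l).
Proof.
  unfold ser_add. rewrite mul_ser0. rewrite mul_su. unfold L2.
  rewrite !mul_lin. unfold ser_du, ser_dv, W, ser0. rewrite !mul_su.
  destruct k as [|[|k]]; destruct l as [|l]; rewrite ?INR_0;
  repeat (rewrite ?Nat.sub_succ, ?Nat.sub_0_r); ring.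
Qed.
End Coef.

Lemma pair_solve N J a02 x Y Z' : 0 < a02 -> 0 <= J -> J + 2 <= N ->
  x + (N-J)*(J+1)*Y = 0 ->
  x + (N-J-1)*(J+1)*Y + (J+1)*(J+1)*Y + a02*(N-J-1)*Z' = 0 ->
  (J+2)*(J+1)*Y + a02*(N-J-2)*Z' = 0 -> Y = 0 /\ Z' = 0.
Proof.
  intros Ha HJ HN HE HF HG.
  pose proof (f_equal (fun t => (J+2)*t) HE) as H1.
  pose proof (f_equal (fun t => (J+2)*t) HF) as H2.
  pose proof (f_equal (fun t => J*t) HG) as H3. simpl in H1, H2, H3.
  assert (HZ : Z' * (a02 * (2*N-J-2)) = 0) by lra.
  apply Rmult_integral in HZ. destruct HZ as [HZ|HZ]; [|nra].
  split; auto. subst Z'.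
  assert (Y * ((J+2)*(J+1)) = 0) by lra.
  apply Rmult_integral in H. destruct H; auto. nra.
Qed.

Section Lin.
Variables (n : nat) (a20 a11 a02 : R).
Hypothesis Hn : (3 <= n)%nat.
Hypothesis Ha : 0 < a02.

Definition EQE (x y z : nat -> R) k :=
  x (S k) + INR (n-k) * INR (S k) * y k + a20 * INR k * z k + a11 * INR (n-k) * z (S k).
Definition EQF (x y z : nat -> R) k :=
  x k + INR (n-k) * INR k * y (k-1)%nat + INR k * INR k * y (k-1)%nat + a20 * INR k * z (k-1)%nat
  + a11 * INR (n-k) * z k + a11 * INR k * z k + a02 * INR (n-k) * z (S k).
Definition EQG (x y z : nat -> R) k :=
  INR k * INR (k-1) * y (k-2)%nat + a11 * INR k * z (k-1)%nat + a02 * INR (n-k) * z k.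

Lemma INR_le' a b : (a <= b)%nat -> INR a <= INR b.
Proof. apply le_INR. Qed.

Lemma lin_zero x y z :
  (forall k, (k <= n)%nat -> EQE x y z k = 0 /\ EQF x y z k = 0 /\ EQG x y z k = 0) ->
  (forall i, (i <= n+1)%nat -> x i = 0) /\ (forall i, (i <= n-1)%nat -> y i = 0) /\
  (forall i, (i <= n)%nat -> z i = 0).
Proof.
  intros H.
  assert (HN : 3 <= INR n) by (replace 3 with (INR 3) by (simpl; ring); apply le_INR; lia).
  assert (z0 : z 0%nat = 0).
  { destruct (H 0%nat) as (_&_&G0); [lia|]. unfold EQG in G0. simpl in G0.
    rewrite Nat.sub_0_r in G0.
    assert (z 0%nat * (a02 * INR n) = 0) by lra.
    apply Rmult_integral in H0. destruct H0; auto. nra. }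
  assert (z1 : z 1%nat = 0).
  { destruct (H 1%nat) as (_&_&G1); [lia|]. unfold EQG in G1. simpl in G1.
    rewrite z0, minus_INR in G1 by lia. simpl in G1.
    assert (z 1%nat * (a02 * (INR n - 1)) = 0) by lra.
    apply Rmult_integral in H0. destruct H0; auto. nra. }
  assert (Hind : forall k, (1 <= k <= n)%nat ->
            (forall i, (i <= k)%nat -> z i = 0) /\ (forall i, (i + 2 <= k)%nat -> y i = 0)).
  { intros k Hk. induction k as [|k IH]; [lia|].
    destruct (Nat.eq_dec k 0) as [->|Hk0].
    { split; intros i Hi; [destruct i as [|[|i]]; auto; lia | lia]. }
    destruct IH as [IHz IHy]; [lia|].
    destruct k as [|j]; [lia|].
    destruct (H j) as (Ej&_&_); [lia|].
    destruct (H (S j)) as (_&Fj&_); [lia|].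
    destruct (H (S (S j))) as (_&_&Gj); [lia|].
    unfold EQE, EQF, EQG in *.
    replace (S j - 1)%nat with j in Fj by lia.
    replace (S (S j) - 1)%nat with (S j) in Gj by lia.
    replace (S (S j) - 2)%nat with j in Gj by lia.
    rewrite (IHz j) in Ej, Fj by lia. rewrite (IHz (S j)) in Ej, Fj, Gj by lia.
    rewrite !minus_INR in Ej, Fj, Gj by lia. rewrite !S_INR in Ej. rewrite !S_INR in Fj. rewrite !S_INR in Gj.
    assert (HJ : INR j + 2 <= INR n).
    { replace (INR j + 2) with (INR (j + 2)) by (rewrite plus_INR; simpl; ring). apply le_INR; lia. }
    destruct (pair_solve (INR n) (INR j) a02 (x (S j)) (y j) (z (S (S j)))) as [Hy Hz];
      auto using pos_INR; try lra.
    split.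
    - intros i Hi. destruct (Nat.eq_dec i (S (S j))) as [->|]; auto. apply IHz; lia.
    - intros i Hi. destruct (Nat.eq_dec i j) as [->|]; auto. apply IHy; lia. }
  destruct (Hind n) as [Hz Hy]; [lia|].
  assert (Hyn : y (n-1)%nat = 0).
  { destruct (H (n-1)%nat) as (En&_&_); [lia|]. destruct (H n) as (_&Fn&_); [lia|].
    unfold EQE, EQF in En, Fn.
    replace (S (n-1))%nat with n in En by lia. replace (n - (n-1))%nat with 1%nat in En by lia.
    rewrite Nat.sub_diag in Fn.
    rewrite (Hz (n-1)%nat), (Hz n) in En by lia. rewrite (Hz (n-1)%nat), (Hz n) in Fn by lia.
    rewrite S_INR, minus_INR in En by lia. simpl INR in En, Fn.
    assert (H1 : INR n * (INR n - 1) * y (n-1)%nat = 0) by lra.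
    apply Rmult_integral in H1. destruct H1 as [H1|H1]; auto. nra. }
  assert (Hy' : forall i, (i <= n-1)%nat -> y i = 0).
  { intros i Hi. destruct (Nat.eq_dec i (n-1)) as [->|]; auto. apply Hy; lia. }
  split; [|split]; auto.
  intros i Hi. destruct i as [|i].
  - destruct (H 0%nat) as (_&F0&_); [lia|]. unfold EQF in F0. simpl in F0.
    rewrite z0, z1 in F0. lra.
  - destruct (H i) as (Ei&_&_); [lia|]. unfold EQE in Ei.
    destruct (Nat.eq_dec i n) as [->|Hin].
    + rewrite Nat.sub_diag in Ei. rewrite (Hz n) in Ei by lia. simpl INR in Ei. lra.
    + rewrite (Hy' i), (Hz i), (Hz (S i)) in Ei by lia. lra.
Qed.

Section Exist.
Variables (e f g : nat -> R).
Let N := INR n.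
Let z0v := g 0%nat / (a02 * N).
Let z1v := (g 1%nat - a11 * z0v) / (a02 * (N - 1)).
Definition znew k zm zk :=
  let K := INR k in
  let p := f k - e (k-1)%nat - a20 * zm - a11 * (K - 1) * zk in
  let q := g (S k) - a11 * (K + 1) * zk in
  ((K+1) * p - (K-1) * q) / (a02 * (2*N - K - 1)).
Fixpoint zz k : R * R := match k with
  | O => (z0v, z1v)
  | S j => (snd (zz j), znew (S j) (fst (zz j)) (snd (zz j))) end.
Definition zs k := fst (zz k).
Definition yval k := let K := INR k in
  (g (S k) - a11 * (K+1) * zs k - a02 * (N - K - 1) * zs (S k)) / ((K+1)*K).
Definition ys i := if Nat.eqb i (n-1) then
  (f n - e (n-1)%nat - a20 * zs (n-1)%nat - a11 * (N-1) * zs n) / (N*(N-1)) else yval (S i).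
Definition xs k := match k with
  | O => f 0%nat - a11 * N * zs 0%nat - a02 * N * zs 1%nat
  | S j => e j - INR (n-j) * INR (S j) * ys j - a20 * INR j * zs j - a11 * INR (n-j) * zs (S j) end.

Lemma zs_SS j : zs (S (S j)) = znew (S j) (zs j) (zs (S j)).
Proof. reflexivity. Qed.
Lemma xs_S j : xs (S j) = e j - INR (n-j) * INR (S j) * ys j - a20 * INR j * zs j - a11 * INR (n-j) * zs (S j).
Proof. reflexivity. Qed.
Lemma xs_0 : xs 0%nat = f 0%nat - a11 * N * zs 0%nat - a02 * N * zs 1%nat.
Proof. reflexivity. Qed.
Lemma zs_0 : zs 0%nat = z0v. Proof. reflexivity. Qed.
Lemma zs_1 : zs 1%nat = z1v. Proof. reflexivity. Qed.

Lemma lin_exists_eqs : forall k, (k <= n)%nat ->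
  EQE xs ys zs k = e k /\ EQF xs ys zs k = f k /\ EQG xs ys zs k = g k.
Proof.
  assert (HN : 3 <= N) by (unfold N; replace 3 with (INR 3) by (simpl; ring); apply le_INR; lia).
  intros k Hk. split; [|split].
  - unfold EQE. rewrite xs_S. ring.
  - destruct k as [|j].
    + unfold EQF. rewrite xs_0. simpl INR. rewrite Nat.sub_0_r. fold N. ring.
    + unfold EQF. rewrite xs_S. replace (S j - 1)%nat with j by lia.
      destruct (Nat.eq_dec (S j) n) as [Hjn|Hjn].
      * unfold ys. replace (Nat.eqb j (n-1)) with true by (symmetry; apply Nat.eqb_eq; lia).
        rewrite Hjn, Nat.sub_diag. replace (n - j)%nat with 1%nat by lia.
        replace (n-1)%nat with j by lia.
        replace (INR j) with (N - 1) by (unfold N; rewrite <- Hjn, S_INR; ring).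
        fold N. simpl INR. field. split; lra.
      * unfold ys. replace (Nat.eqb j (n-1)) with false by (symmetry; apply Nat.eqb_neq; lia).
        unfold yval. rewrite !zs_SS. unfold znew.
        replace (S j - 1)%nat with j by lia.
        rewrite !minus_INR by lia. rewrite !S_INR. fold N.
        assert (0 <= INR j) by apply pos_INR.
        assert (INR j + 2 <= N).
        { unfold N. replace (INR j + 2) with (INR (j + 2)) by (rewrite plus_INR; simpl; ring).
          apply le_INR; lia. }
        field. split; [nra|]. split; lra.
  - destruct k as [|[|j]].
    + unfold EQG. simpl INR. rewrite Nat.sub_0_r, zs_0. fold N. unfold z0v. field. nra.
    + unfold EQG. replace (1-1)%nat with 0%nat by lia. rewrite zs_0, zs_1. unfold z1v, z0v.
      rewrite minus_INR by lia. fold N. simpl INR.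
      field. split; nra.
    + unfold EQG. unfold ys. replace (Nat.eqb (S (S j) - 2) (n-1)) with false
        by (symmetry; apply Nat.eqb_neq; lia).
      replace (S (S j) - 2)%nat with j by lia. replace (S (S j) - 1)%nat with (S j) by lia.
      unfold yval. rewrite !minus_INR by lia. rewrite !S_INR. fold N.
      assert (0 <= INR j) by apply pos_INR.
      field. nra.
Qed.

Lemma lin_exists : exists x y z : nat -> R, forall k, (k <= n)%nat ->
  EQE x y z k = e k /\ EQF x y z k = f k /\ EQG x y z k = g k.
Proof. exists xs, ys, zs. apply lin_exists_eqs. Qed.
End Exist.
End Lin.

Ltac csimp := unfold ser_mul, C; simpl; field.
Lemma m00 P Q : ser_mul P Q 0%nat 0%nat = P 0%nat 0%nat * Q 0%nat 0%nat.
Proof. csimp. Qed.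
Lemma m10 P Q : ser_mul P Q 1%nat 0%nat = P 0%nat 0%nat * Q 1%nat 0%nat + P 1%nat 0%nat * Q 0%nat 0%nat.
Proof. csimp. Qed.
Lemma m01 P Q : ser_mul P Q 0%nat 1%nat = P 0%nat 0%nat * Q 0%nat 1%nat + P 0%nat 1%nat * Q 0%nat 0%nat.
Proof. csimp. Qed.
Lemma m20 P Q : ser_mul P Q 2%nat 0%nat = P 0%nat 0%nat * Q 2%nat 0%nat + 2 * P 1%nat 0%nat * Q 1%nat 0%nat + P 2%nat 0%nat * Q 0%nat 0%nat.
Proof. csimp. Qed.
Lemma m02 P Q : ser_mul P Q 0%nat 2%nat = P 0%nat 0%nat * Q 0%nat 2%nat + 2 * P 0%nat 1%nat * Q 0%nat 1%nat + P 0%nat 2%nat * Q 0%nat 0%nat.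
Proof. csimp. Qed.
Lemma m11 P Q : ser_mul P Q 1%nat 1%nat = P 0%nat 0%nat * Q 1%nat 1%nat + P 0%nat 1%nat * Q 1%nat 0%nat + P 1%nat 0%nat * Q 0%nat 1%nat + P 1%nat 1%nat * Q 0%nat 0%nat.
Proof. csimp. Qed.

Definition resE E b m X Y Z := ser_sub E (dot3 (du3 (fm b m X Y Z)) (du3 (fm b m X Y Z))).
Definition resF F b m X Y Z := ser_sub F (dot3 (du3 (fm b m X Y Z)) (dv3 (fm b m X Y Z))).
Definition resG G b m X Y Z := ser_sub G (dot3 (dv3 (fm b m X Y Z)) (dv3 (fm b m X Y Z))).

Section Base.
Variables (E F G : ser) (b : nat -> R) (m : nat) (X Y Z : ser).
Hypotheses (hX00 : X 0%nat 0%nat = 0) (hX10 : X 1%nat 0%nat = 1) (hX01 : X 0%nat 1%nat = 0)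
  (hY00 : Y 0%nat 0%nat = 0) (hZ00 : Z 0%nat 0%nat = 0) (hZ10 : Z 1%nat 0%nat = 0) (hZ01 : Z 0%nat 1%nat = 0).

Lemma oY1 : order_ge 1 Y.
Proof. intros k l H. replace k with 0%nat by lia. replace l with 0%nat by lia. auto. Qed.

Lemma bz i j : (i + j < 3)%nat -> beta_comp b m Y i j = 0.
Proof. intro H; apply (beta_order b m Y oY1); lia. Qed.

Ltac bsimp := unfold resE, resF, resG, ser_sub, dot3, du3, dv3, fm, ser_add, ser_du, ser_dv;
  rewrite ?m00, ?m10, ?m01, ?m20, ?m02, ?m11;
  rewrite ?(bz 0 0), ?(bz 1 0), ?(bz 0 1), ?(bz 2 0), ?(bz 1 1), ?(bz 0 2) by lia;
  rewrite ?m00, ?m10, ?m01, ?m20, ?m02, ?m11;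
  rewrite ?hX00, ?hX10, ?hX01, ?hY00, ?hZ00, ?hZ10, ?hZ01; ring.

Lemma rE00 : resE E b m X Y Z 0%nat 0%nat = E 0%nat 0%nat - 1. Proof. bsimp. Qed.
Notation "P [ i , j ]" := (P i%nat j%nat) (at level 9, i at level 50, j at level 50, only parsing).
Lemma rE10 : resE E b m X Y Z 1%nat 0%nat = E[1,0] - 2 * X[2,0]. Proof. bsimp. Qed.
Lemma rE01 : resE E b m X Y Z 0%nat 1%nat = E[0,1] - 2 * X[1,1]. Proof. bsimp. Qed.
Lemma rE20 : resE E b m X Y Z 2%nat 0%nat = E[2,0] - (2*X[3,0] + 2*X[2,0]^2 + 8*Y[1,0]^2 + 2*Z[2,0]^2).
Proof. bsimp. Qed.
Lemma rE11 : resE E b m X Y Z 1%nat 1%nat = E[1,1] - (2*X[2,1] + 2*X[2,0]*X[1,1] + 4*Y[1,0]*Y[0,1] + 2*Z[2,0]*Z[1,1]).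
Proof. bsimp. Qed.
Lemma rE02 : resE E b m X Y Z 0%nat 2%nat = E[0,2] - (2*X[1,2] + 2*X[1,1]^2 + 2*Y[0,1]^2 + 2*Z[1,1]^2).
Proof. bsimp. Qed.
Lemma rF00 : resF F b m X Y Z 0%nat 0%nat = F[0,0]. Proof. bsimp. Qed.
Lemma rF10 : resF F b m X Y Z 1%nat 0%nat = F[1,0] - X[1,1]. Proof. bsimp. Qed.
Lemma rF01 : resF F b m X Y Z 0%nat 1%nat = F[0,1] - X[0,2]. Proof. bsimp. Qed.
Lemma rF20 : resF F b m X Y Z 2%nat 0%nat = F[2,0] - (X[2,1] + 2*X[2,0]*X[1,1] + 4*Y[1,0]*Y[0,1] + 2*Z[2,0]*Z[1,1]).
Proof. bsimp. Qed.
Lemma rF11 : resF F b m X Y Z 1%nat 1%nat = F[1,1] - (X[1,2] + X[1,1]^2 + X[2,0]*X[0,2] + Y[0,1]^2 + Z[1,1]^2 + Z[2,0]*Z[0,2]).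
Proof. bsimp. Qed.
Lemma rF02 : resF F b m X Y Z 0%nat 2%nat = F[0,2] - (X[0,3] + 2*X[1,1]*X[0,2] + 2*Z[1,1]*Z[0,2]).
Proof. bsimp. Qed.
Lemma rG00 : resG G b m X Y Z 0%nat 0%nat = G[0,0]. Proof. bsimp. Qed.
Lemma rG10 : resG G b m X Y Z 1%nat 0%nat = G[1,0]. Proof. bsimp. Qed.
Lemma rG01 : resG G b m X Y Z 0%nat 1%nat = G[0,1]. Proof. bsimp. Qed.
Lemma rG20 : resG G b m X Y Z 2%nat 0%nat = G[2,0] - (2*X[1,1]^2 + 2*Y[0,1]^2 + 2*Z[1,1]^2).
Proof. bsimp. Qed.
Lemma rG11 : resG G b m X Y Z 1%nat 1%nat = G[1,1] - (2*X[1,1]*X[0,2] + 2*Z[1,1]*Z[0,2]).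
Proof. bsimp. Qed.
Lemma rG02 : resG G b m X Y Z 0%nat 2%nat = G[0,2] - (2*X[0,2]^2 + 2*Z[0,2]^2).
Proof. bsimp. Qed.
End Base.

Definition sol E F G b m n X Y Z :=
  X 0%nat 0%nat = 0 /\ X 1%nat 0%nat = 1 /\ X 0%nat 1%nat = 0 /\
  (forall k l, (n + 1 < k + l)%nat -> X k l = 0) /\
  Y 0%nat 0%nat = 0 /\ (forall k l, (n - 1 < k + l)%nat -> Y k l = 0) /\
  (forall k l, (k + l < 2)%nat -> Z k l = 0) /\ (forall k l, (n < k + l)%nat -> Z k l = 0) /\
  0 < Y 0%nat 1%nat /\ 0 < Z 0%nat 2%nat /\
  order_ge (n + 1) (resE E b m X Y Z) /\ order_ge (n + 1) (resF F b m X Y Z) /\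
  order_ge (n + 1) (resG G b m X Y Z).

Lemma fs_sol E F G b m X Y Z : formal_solution E F G b m X Y Z <-> sol E F G b m m X Y Z.
Proof. unfold formal_solution, sol, resE, resF, resG. tauto. Qed.

Section B.
Variables (E F G : ser) (a20 a11 a02 : R).
Hypothesis Ha : 0 < a02.
Hypothesis HN : normalized E F G a20 a11 a02.

Lemma tay (P : ser) k l v : ocoef P k l = v -> P k l = v * (INR (fact k) * INR (fact l)).
Proof. unfold ocoef. intro H. rewrite <- H. field. split; apply INR_fact_neq_0. Qed.

Lemma nvals :
  E 0%nat 0%nat = 1 /\ E 1%nat 0%nat = 0 /\ E 0%nat 1%nat = 0 /\ E 2%nat 0%nat = 2 * a20^2 /\
  E 1%nat 1%nat = 2 * a20 * a11 /\ E 0%nat 2%nat = 2 * (1 + a11^2) /\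
  F 0%nat 0%nat = 0 /\ F 1%nat 0%nat = 0 /\ F 0%nat 1%nat = 0 /\ F 2%nat 0%nat = 2 * (a20 * a11) /\
  F 1%nat 1%nat = a20 * a02 + a11^2 + 1 /\ F 0%nat 2%nat = 2 * (a11 * a02) /\
  G 0%nat 0%nat = 0 /\ G 1%nat 0%nat = 0 /\ G 0%nat 1%nat = 0 /\ G 2%nat 0%nat = 2 * (1 + a11^2) /\
  G 1%nat 1%nat = 2 * a11 * a02 /\ G 0%nat 2%nat = 2 * a02^2.
Proof.
  destruct HN as (e1&e2&e3&e4&e5&e6&f1&f2&f3&f4&f5&f6&g1&g2&g3&g4&g5&g6).
  apply tay in e1, e2, e3, e4, e5, e6, f1, f2, f3, f4, f5, f6, g1, g2, g3, g4, g5, g6.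
  simpl in *. repeat split; [rewrite e1|rewrite e2|rewrite e3|rewrite e4|rewrite e5|rewrite e6
   |rewrite f1|rewrite f2|rewrite f3|rewrite f4|rewrite f5|rewrite f6
   |rewrite g1|rewrite g2|rewrite g3|rewrite g4|rewrite g5|rewrite g6]; ring.
Qed.

Definition low X Y Z := eqm 3 X su /\ eqm 2 Y sv /\ eqm 3 Z (Z2 a20 a11 a02).

Lemma base_low b m n X Y Z : (2 <= n)%nat -> sol E F G b m n X Y Z -> low X Y Z.
Proof.
  intros Hn (hX00&hX10&hX01&_&hY00&_&hZ&_&hY01&hZ02&rE&rF&rG).
  pose proof (hZ 0%nat 0%nat ltac:(lia)) as hZ00.
  pose proof (hZ 1%nat 0%nat ltac:(lia)) as hZ10.
  pose proof (hZ 0%nat 1%nat ltac:(lia)) as hZ01.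
  destruct nvals as (e1&e2&e3&e4&e5&e6&f1&f2&f3&f4&f5&f6&g1&g2&g3&g4&g5&g6).
  assert (R1 := rE 1%nat 0%nat ltac:(lia)). rewrite rE10, e2 in R1 by auto.
  assert (R2 := rE 0%nat 1%nat ltac:(lia)). rewrite rE01, e3 in R2 by auto.
  assert (R3 := rE 2%nat 0%nat ltac:(lia)). rewrite rE20, e4 in R3 by auto.
  assert (R4 := rE 1%nat 1%nat ltac:(lia)). rewrite rE11, e5 in R4 by auto.
  assert (R5 := rE 0%nat 2%nat ltac:(lia)). rewrite rE02, e6 in R5 by auto.
  assert (S1 := rF 0%nat 1%nat ltac:(lia)). rewrite rF01, f3 in S1 by auto.
  assert (S2 := rF 2%nat 0%nat ltac:(lia)). rewrite rF20, f4 in S2 by auto.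
  assert (S3 := rF 1%nat 1%nat ltac:(lia)). rewrite rF11, f5 in S3 by auto.
  assert (T1 := rG 2%nat 0%nat ltac:(lia)). rewrite rG20, g4 in T1 by auto.
  assert (T2 := rG 1%nat 1%nat ltac:(lia)). rewrite rG11, g5 in T2 by auto.
  assert (T3 := rG 0%nat 2%nat ltac:(lia)). rewrite rG02, g6 in T3 by auto.
  assert (x20 : X 2%nat 0%nat = 0) by lra.
  assert (x11 : X 1%nat 1%nat = 0) by lra.
  assert (x02 : X 0%nat 2%nat = 0) by lra.
  rewrite x02 in T3. rewrite x11, x02 in T2. rewrite x11 in T1.
  assert (z02 : Z 0%nat 2%nat = a02) by nra.
  rewrite z02 in T2.
  assert (z11 : Z 1%nat 1%nat = a11).
  { assert ((Z 1%nat 1%nat - a11) * a02 = 0) by lra. apply Rmult_integral in H. lra. }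
  rewrite z11 in T1.
  assert (y01 : Y 0%nat 1%nat = 1) by nra.
  rewrite x11, y01, z11 in R5.
  assert (x12 : X 1%nat 2%nat = 0) by lra.
  rewrite x12, x11, x20, y01, z11, z02 in S3.
  assert (z20 : Z 2%nat 0%nat = a20).
  { assert ((Z 2%nat 0%nat - a20) * a02 = 0) by lra. apply Rmult_integral in H. lra. }
  rewrite x20, x11, y01, z20, z11 in R4, S2.
  assert (y10 : Y 1%nat 0%nat = 0) by lra.
  split; [|split]; intros k l Hkl; unfold ser_sub, su, sv, lin, Z2;
    destruct k as [|[|[|k]]]; destruct l as [|[|[|l]]]; try lia;
    rewrite ?hX00, ?hX10, ?hX01, ?x20, ?x11, ?x02, ?hY00, ?y10, ?y01, ?hZ00, ?hZ10, ?hZ01,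
      ?z20, ?z11, ?z02; ring.
Qed.

Lemma base_exists b m : sol E F G b m 2 su sv (Z2 a20 a11 a02).
Proof.
  destruct nvals as (e1&e2&e3&e4&e5&e6&f1&f2&f3&f4&f5&f6&g1&g2&g3&g4&g5&g6).
  assert (h1 : su 0%nat 0%nat = 0) by reflexivity.
  assert (h2 : su 1%nat 0%nat = 1) by reflexivity.
  assert (h3 : su 0%nat 1%nat = 0) by reflexivity.
  assert (h4 : sv 0%nat 0%nat = 0) by reflexivity.
  assert (h5 : Z2 a20 a11 a02 0%nat 0%nat = 0) by reflexivity.
  assert (h6 : Z2 a20 a11 a02 1%nat 0%nat = 0) by reflexivity.
  assert (h7 : Z2 a20 a11 a02 0%nat 1%nat = 0) by reflexivity.
  unfold sol. repeat split.
  - intros [|[|[|[|k]]]] [|[|[|[|l]]]] H; try lia; reflexivity.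
  - intros [|[|k]] [|[|l]] H; try lia; reflexivity.
  - intros [|[|k]] [|[|l]] H; try lia; reflexivity.
  - intros [|[|[|k]]] [|[|[|l]]] H; try lia; reflexivity.
  - unfold sv, lin. lra.
  - unfold Z2. lra.
  - intros k l H; destruct k as [|[|[|k]]]; destruct l as [|[|[|l]]]; try lia;
      [rewrite rE00|rewrite rE01|rewrite rE02|rewrite rE10|rewrite rE11|rewrite rE20]; auto;
      rewrite ?e1, ?e2, ?e3, ?e4, ?e5, ?e6; unfold su, sv, lin, Z2; ring.
  - intros k l H; destruct k as [|[|[|k]]]; destruct l as [|[|[|l]]]; try lia;
      [rewrite rF00|rewrite rF01|rewrite rF02|rewrite rF10|rewrite rF11|rewrite rF20]; auto;
      rewrite ?f1, ?f2, ?f3, ?f4, ?f5, ?f6; unfold su, sv, lin, Z2; ring.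
  - intros k l H; destruct k as [|[|[|k]]]; destruct l as [|[|[|l]]]; try lia;
      [rewrite rG00|rewrite rG01|rewrite rG02|rewrite rG10|rewrite rG11|rewrite rG20]; auto;
      rewrite ?g1, ?g2, ?g3, ?g4, ?g5, ?g6; unfold su, sv, lin, Z2; ring.
Qed.
End B.

Lemma eqm_at N P Q L k l : eqm N P (ser_add Q L) -> (k + l < N)%nat -> P k l = Q k l + L k l.
Proof. intros H Hk. specialize (H k l Hk). unfold ser_sub, ser_add in H. lra. Qed.

Lemma res_at (E P : ser) k l : ser_sub E P k l = E k l - P k l.
Proof. reflexivity. Qed.

Section Step.
Variables (E F G : ser) (a20 a11 a02 : R) (b : nat -> R) (m n : nat).
Hypothesis Hn : (3 <= n)%nat.

Section Coefs.
Variables (X Y Z dX dY dZ : ser).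
Hypotheses (HX : eqm 3 X su) (HY : eqm 2 Y sv) (HZ : eqm 3 Z (Z2 a20 a11 a02))
  (HdX : order_ge (n+1) dX) (HdY : order_ge (n-1) dY) (HdZ : order_ge n dZ).
Let X' := ser_add X dX.
Let Y' := ser_add Y dY.
Let Z' := ser_add Z dZ.

Lemma stepE k l : (k + l <= n)%nat ->
  resE E b m X' Y' Z' k l = resE E b m X Y Z k l
   - 2 * (dX (S k) l + INR l * INR (S k) * dY k (l-1)%nat + a20 * INR k * dZ k l
         + a11 * INR l * dZ (S k) (l-1)%nat).
Proof.
  intro Hk. unfold resE, X', Y', Z'. rewrite !res_at.
  rewrite (eqm_at _ _ _ _ k l (expE b m n a20 a11 a02 X Y Z dX dY dZ Hn HX HY HZ HdX HdY HdZ)) by lia.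
  rewrite cE. ring.
Qed.

Lemma stepF k l : (k + l <= n)%nat ->
  resF F b m X' Y' Z' k l = resF F b m X Y Z k l
   - (dX k (S l) + INR l * INR k * dY (k-1)%nat l + INR k * INR k * dY (k-1)%nat l
    + a20 * INR k * dZ (k-1)%nat (S l) + a11 * INR l * dZ k l + a11 * INR k * dZ k l
    + a02 * INR l * dZ (S k) (l-1)%nat).
Proof.
  intro Hk. unfold resF, X', Y', Z'. rewrite !res_at.
  rewrite (eqm_at _ _ _ _ k l (expF b m n a20 a11 a02 X Y Z dX dY dZ Hn HX HY HZ HdX HdY HdZ)) by lia.
  rewrite cF. ring.
Qed.

Lemma stepG k l : (k + l <= n)%nat ->
  resG G b m X' Y' Z' k l = resG G b m X Y Z k l
   - 2 * (INR k * INR (k-1) * dY (k-2)%nat (S l) + a11 * INR k * dZ (k-1)%nat (S l)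
         + a02 * INR l * dZ k l).
Proof.
  intro Hk. unfold resG, X', Y', Z'. rewrite !res_at.
  rewrite (eqm_at _ _ _ _ k l (expG b m n a20 a11 a02 X Y Z dX dY dZ Hn HX HY HZ HdX HdY HdZ)) by lia.
  rewrite cG. ring.
Qed.

Lemma step0E k l : (k + l < n)%nat -> resE E b m X' Y' Z' k l = resE E b m X Y Z k l.
Proof.
  intro Hk. rewrite stepE by lia. rewrite (HdX (S k) l), (HdZ k l) by lia.
  destruct l as [|l].
  - rewrite INR_0. ring.
  - replace (S l - 1)%nat with l by lia. rewrite (HdY k l), (HdZ (S k) l) by lia. ring.
Qed.
Lemma step0F k l : (k + l < n)%nat -> resF F b m X' Y' Z' k l = resF F b m X Y Z k l.
Proof.
  intro Hk. rewrite stepF by lia. rewrite (HdX k (S l)), (HdZ k l) by lia.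
  destruct l as [|l].
  - rewrite INR_0. destruct k as [|k]; [rewrite INR_0; ring|].
    replace (S k - 1)%nat with k by lia. rewrite (HdY k 0%nat), (HdZ k 1%nat) by lia. ring.
  - replace (S l - 1)%nat with l by lia. rewrite (HdZ (S k) l) by lia.
    destruct k as [|k]; [rewrite INR_0; ring|].
    replace (S k - 1)%nat with k by lia. rewrite (HdY k (S l)), (HdZ k (S (S l))) by lia. ring.
Qed.
Lemma step0G k l : (k + l < n)%nat -> resG G b m X' Y' Z' k l = resG G b m X Y Z k l.
Proof.
  intro Hk. rewrite stepG by lia. rewrite (HdZ k l) by lia.
  destruct k as [|[|k]].
  - rewrite INR_0. ring.
  - replace (1-1)%nat with 0%nat by lia. rewrite INR_0, (HdZ 0%nat (S l)) by lia. ring.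
  - replace (S (S k) - 1)%nat with (S k) by lia. replace (S (S k) - 2)%nat with k by lia.
    rewrite (HdY k (S l)), (HdZ (S k) (S l)) by lia. ring.
Qed.
End Coefs.

Definition xo (dX : ser) : nat -> R := fun i => dX i (n+1-i)%nat.
Definition yo (dY : ser) : nat -> R := fun i => dY i (n-1-i)%nat.
Definition zo (dZ : ser) : nat -> R := fun i => dZ i (n-i)%nat.

Lemma convE dX dY dZ k : (k <= n)%nat ->
  dX (S k) (n-k)%nat + INR (n-k) * INR (S k) * dY k (n-k-1)%nat + a20 * INR k * dZ k (n-k)%nat
  + a11 * INR (n-k) * dZ (S k) (n-k-1)%nat = EQE n a20 a11 (xo dX) (yo dY) (zo dZ) k.
Proof.
  intro Hk. unfold EQE, xo, yo, zo.
  replace (n + 1 - S k)%nat with (n-k)%nat by lia.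
  replace (n - 1 - k)%nat with (n-k-1)%nat by lia.
  replace (n - S k)%nat with (n-k-1)%nat by lia. reflexivity.
Qed.

Lemma convF dX dY dZ k : (k <= n)%nat ->
  dX k (S (n-k)) + INR (n-k) * INR k * dY (k-1)%nat (n-k)%nat + INR k * INR k * dY (k-1)%nat (n-k)%nat
    + a20 * INR k * dZ (k-1)%nat (S (n-k)) + a11 * INR (n-k) * dZ k (n-k)%nat + a11 * INR k * dZ k (n-k)%nat
    + a02 * INR (n-k) * dZ (S k) (n-k-1)%nat = EQF n a20 a11 a02 (xo dX) (yo dY) (zo dZ) k.
Proof.
  intro Hk. unfold EQF, xo, yo, zo.
  replace (n + 1 - k)%nat with (S (n-k))%nat by lia.
  replace (n - S k)%nat with (n-k-1)%nat by lia.
  destruct k as [|k].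
  - rewrite INR_0. ring.
  - replace (n - 1 - (S k - 1))%nat with (n - S k)%nat by lia.
    replace (n - (S k - 1))%nat with (S (n - S k)) by lia. reflexivity.
Qed.

Lemma convG dX dY dZ k : (k <= n)%nat ->
  INR k * INR (k-1) * dY (k-2)%nat (S (n-k)) + a11 * INR k * dZ (k-1)%nat (S (n-k))
  + a02 * INR (n-k) * dZ k (n-k)%nat = EQG n a11 a02 (xo dX) (yo dY) (zo dZ) k.
Proof.
  intro Hk. unfold EQG, xo, yo, zo.
  destruct k as [|[|k]].
  - rewrite INR_0. ring.
  - replace (S (n-1)) with n by lia. replace (1-1)%nat with 0%nat by lia.
    rewrite Nat.sub_0_r, INR_0. replace (n-0)%nat with n by lia. ring.
  - replace (n - 1 - (S (S k) - 2))%nat with (S (n - S (S k))) by lia.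
    replace (n - (S (S k) - 1))%nat with (S (n - S (S k))) by lia. reflexivity.
Qed.

Lemma EQE_sub x y z x' y' z' k :
  EQE n a20 a11 (fun i => x i - x' i) (fun i => y i - y' i) (fun i => z i - z' i) k
  = EQE n a20 a11 x y z k - EQE n a20 a11 x' y' z' k.
Proof. unfold EQE; ring. Qed.
Lemma EQF_sub x y z x' y' z' k :
  EQF n a20 a11 a02 (fun i => x i - x' i) (fun i => y i - y' i) (fun i => z i - z' i) k
  = EQF n a20 a11 a02 x y z k - EQF n a20 a11 a02 x' y' z' k.
Proof. unfold EQF; ring. Qed.
Lemma EQG_sub x y z x' y' z' k :
  EQG n a11 a02 (fun i => x i - x' i) (fun i => y i - y' i) (fun i => z i - z' i) k
  = EQG n a11 a02 x y z k - EQG n a11 a02 x' y' z' k.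
Proof. unfold EQG; ring. Qed.

Section Ext.
Variables (x y z x' y' z' : nat -> R).
Hypotheses (Hx : forall i, (i <= n+1)%nat -> x i = x' i) (Hy : forall i, (i <= n-1)%nat -> y i = y' i)
  (Hz : forall i, (i <= n)%nat -> z i = z' i).
Lemma EQ_ext k : (k <= n)%nat ->
  EQE n a20 a11 x y z k = EQE n a20 a11 x' y' z' k /\
  EQF n a20 a11 a02 x y z k = EQF n a20 a11 a02 x' y' z' k /\
  EQG n a11 a02 x y z k = EQG n a11 a02 x' y' z' k.
Proof.
  intro Hk. unfold EQE, EQF, EQG.
  rewrite (Hx (S k)), (Hx k), (Hz k), (Hy (k-1)%nat), (Hz (k-1)%nat), (Hy (k-2)%nat) by lia.
  destruct (Nat.eq_dec k n) as [->|Hkn].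
  - rewrite Nat.sub_diag, INR_0. repeat split; ring.
  - rewrite (Hy k), (Hz (S k)) by lia. repeat split; ring.
Qed.
End Ext.
End Step.

Definition trunc (d : nat) (P : ser) : ser := fun k l => if (k + l <=? d)%nat then P k l else 0.
Definition diag (d : nat) (P : ser) : ser := fun k l => if (k + l =? d)%nat then P k l else 0.

Lemma split_ser d P : (1 <= d)%nat -> (forall k l, (d < k + l)%nat -> P k l = 0) ->
  P = ser_add (trunc (d-1) P) (diag d P).
Proof.
  intros Hd H. apply ser_ext; intros k l. unfold ser_add, trunc, diag.
  destruct (Nat.leb_spec (k+l) (d-1)); destruct (Nat.eqb_spec (k+l) d); try lia.
  - ring.
  - ring.
  - rewrite H by lia. ring.
Qed.

Lemma order_diag d P : order_ge d (diag d P).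
Proof. intros k l H. unfold diag. destruct (Nat.eqb_spec (k+l) d); [lia|reflexivity]. Qed.

Lemma trunc_in d P k l : (k + l <= d)%nat -> trunc d P k l = P k l.
Proof. intro H; unfold trunc. destruct (Nat.leb_spec (k+l) d); [reflexivity|lia]. Qed.
Lemma trunc_out d P k l : (d < k + l)%nat -> trunc d P k l = 0.
Proof. intro H; unfold trunc. destruct (Nat.leb_spec (k+l) d); [lia|reflexivity]. Qed.

Definition dg (d : nat) (x : nat -> R) : ser := fun k l => if (k + l =? d)%nat then x k else 0.
Lemma dg_out d x k l : (k + l <> d)%nat -> dg d x k l = 0.
Proof. intro H; unfold dg. destruct (Nat.eqb_spec (k+l) d); [lia|reflexivity]. Qed.
Lemma dg_in d x k l : (k + l = d)%nat -> dg d x k l = x k.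
Proof. intro H; unfold dg. destruct (Nat.eqb_spec (k+l) d); [reflexivity|lia]. Qed.
Lemma order_dg d x : order_ge d (dg d x).
Proof. intros k l H. apply dg_out. lia. Qed.

Section Ind.
Variables (E F G : ser) (a20 a11 a02 : R).
Hypothesis Ha : 0 < a02.
Hypothesis HN : normalized E F G a20 a11 a02.
Variables (b : nat -> R) (m : nat).

Lemma trunc_sol n X Y Z : (3 <= n)%nat -> sol E F G b m n X Y Z ->
  sol E F G b m (n-1) (trunc n X) (trunc (n-2) Y) (trunc (n-1) Z) /\
  low a20 a11 a02 (trunc n X) (trunc (n-2) Y) (trunc (n-1) Z).
Proof.
  intros Hn HS.
  pose proof (base_low E F G a20 a11 a02 Ha HN b m n X Y Z ltac:(lia) HS) as (LX&LY&LZ).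
  destruct HS as (hX00&hX10&hX01&hXd&hY00&hYd&hZl&hZd&hY01&hZ02&rE&rF&rG).
  assert (eX := split_ser (n+1) X ltac:(lia) hXd). replace (n+1-1)%nat with n in eX by lia.
  assert (eY := split_ser (n-1) Y ltac:(lia) hYd). replace (n-1-1)%nat with (n-2)%nat in eY by lia.
  assert (eZ := split_ser n Z ltac:(lia) hZd).
  assert (lowT : low a20 a11 a02 (trunc n X) (trunc (n-2) Y) (trunc (n-1) Z)).
  { split; [|split]; intros k l Hkl; unfold ser_sub; rewrite trunc_in by lia.
    - apply LX; lia. - apply LY; lia. - apply LZ; lia. }
  split; auto.
  destruct lowT as (TX&TY&TZ).
  assert (HdX := order_diag (n+1) X). assert (HdY := order_diag (n-1) Y). assert (HdZ := order_diag n Z).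
  assert (HRE : resE E b m X Y Z = resE E b m (ser_add (trunc n X) (diag (n+1) X))
            (ser_add (trunc (n-2) Y) (diag (n-1) Y)) (ser_add (trunc (n-1) Z) (diag n Z)))
    by (rewrite <- eX, <- eY, <- eZ; reflexivity).
  assert (HRF : resF F b m X Y Z = resF F b m (ser_add (trunc n X) (diag (n+1) X))
            (ser_add (trunc (n-2) Y) (diag (n-1) Y)) (ser_add (trunc (n-1) Z) (diag n Z)))
    by (rewrite <- eX, <- eY, <- eZ; reflexivity).
  assert (HRG : resG G b m X Y Z = resG G b m (ser_add (trunc n X) (diag (n+1) X))
            (ser_add (trunc (n-2) Y) (diag (n-1) Y)) (ser_add (trunc (n-1) Z) (diag n Z)))
    by (rewrite <- eX, <- eY, <- eZ; reflexivity).
  unfold sol. repeat split.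
  - rewrite trunc_in by lia; auto.
  - rewrite trunc_in by lia; auto.
  - rewrite trunc_in by lia; auto.
  - intros k l H; apply trunc_out; lia.
  - rewrite trunc_in by lia; auto.
  - intros k l H; apply trunc_out; lia.
  - intros k l H; rewrite trunc_in by lia; auto.
  - intros k l H; apply trunc_out; lia.
  - rewrite trunc_in by lia; auto.
  - rewrite trunc_in by lia; auto.
  - intros k l H. rewrite <- (step0E E a20 a11 a02 b m n Hn _ _ _ _ _ _ TX TY TZ HdX HdY HdZ) by lia.
    rewrite <- HRE. apply rE; lia.
  - intros k l H. rewrite <- (step0F F a20 a11 a02 b m n Hn _ _ _ _ _ _ TX TY TZ HdX HdY HdZ) by lia.
    rewrite <- HRF. apply rF; lia.
  - intros k l H. rewrite <- (step0G G a20 a11 a02 b m n Hn _ _ _ _ _ _ TX TY TZ HdX HdY HdZ) by lia.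
    rewrite <- HRG. apply rG; lia.
Qed.
End Ind.

Section Main.
Variables (E F G : ser) (a20 a11 a02 : R).
Hypothesis Ha : 0 < a02.
Hypothesis HN : normalized E F G a20 a11 a02.
Variables (b : nat -> R) (m : nat).

Section D.
Variable n : nat.
Hypothesis Hn : (3 <= n)%nat.
Variables (X Y Z dX dY dZ : ser).
Hypotheses (HX : eqm 3 X su) (HY : eqm 2 Y sv) (HZ : eqm 3 Z (Z2 a20 a11 a02))
  (HdX : order_ge (n+1) dX) (HdY : order_ge (n-1) dY) (HdZ : order_ge n dZ).

Lemma dE k : (k <= n)%nat ->
  resE E b m (ser_add X dX) (ser_add Y dY) (ser_add Z dZ) k (n-k)%nat =
  resE E b m X Y Z k (n-k)%nat - 2 * EQE n a20 a11 (xo n dX) (yo n dY) (zo n dZ) k.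
Proof.
  intro Hk. rewrite (stepE E a20 a11 a02 b m n Hn X Y Z dX dY dZ HX HY HZ HdX HdY HdZ) by lia.
  rewrite <- convE by lia. reflexivity.
Qed.
Lemma dF k : (k <= n)%nat ->
  resF F b m (ser_add X dX) (ser_add Y dY) (ser_add Z dZ) k (n-k)%nat =
  resF F b m X Y Z k (n-k)%nat - EQF n a20 a11 a02 (xo n dX) (yo n dY) (zo n dZ) k.
Proof.
  intro Hk. rewrite (stepF F a20 a11 a02 b m n Hn X Y Z dX dY dZ HX HY HZ HdX HdY HdZ) by lia.
  rewrite <- convF by lia. reflexivity.
Qed.
Lemma dG k : (k <= n)%nat ->
  resG G b m (ser_add X dX) (ser_add Y dY) (ser_add Z dZ) k (n-k)%nat =
  resG G b m X Y Z k (n-k)%nat - 2 * EQG n a11 a02 (xo n dX) (yo n dY) (zo n dZ) k.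
Proof.
  intro Hk. rewrite (stepG G a20 a11 a02 b m n Hn X Y Z dX dY dZ HX HY HZ HdX HdY HdZ) by lia.
  rewrite <- convG by lia. reflexivity.
Qed.
End D.

Definition uniq n := forall X Y Z X' Y' Z', sol E F G b m n X Y Z -> sol E F G b m n X' Y' Z' ->
  forall k l, X' k l = X k l /\ Y' k l = Y k l /\ Z' k l = Z k l.

Lemma diag_eq d P Q k l : (k <= d)%nat -> (forall i, (i <= d)%nat -> P i (d - i)%nat = Q i (d - i)%nat) ->
  diag d P k l = diag d Q k l.
Proof.
  intros _ H. unfold diag. destruct (Nat.eqb_spec (k+l) d); [|reflexivity].
  replace l with (d - k)%nat by lia. apply H. lia.
Qed.

Lemma step_unique n : (3 <= n)%nat -> uniq (n-1) -> uniq n.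
Proof.
  intros Hn IH X1 Y1 Z1 X2 Y2 Z2 S1 S2.
  destruct (trunc_sol E F G a20 a11 a02 Ha HN b m n X1 Y1 Z1 Hn S1) as [T1 (LX1&LY1&LZ1)].
  destruct (trunc_sol E F G a20 a11 a02 Ha HN b m n X2 Y2 Z2 Hn S2) as [T2 (LX2&LY2&LZ2)].
  assert (Heq := IH _ _ _ _ _ _ T1 T2).
  assert (eTX : trunc n X2 = trunc n X1) by (apply ser_ext; intros; apply Heq).
  assert (eTY : trunc (n-2) Y2 = trunc (n-2) Y1) by (apply ser_ext; intros; apply Heq).
  assert (eTZ : trunc (n-1) Z2 = trunc (n-1) Z1) by (apply ser_ext; intros; apply Heq).
  destruct S1 as (_&_&_&hXd1&_&hYd1&_&hZd1&_&_&rE1&rF1&rG1).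
  destruct S2 as (_&_&_&hXd2&_&hYd2&_&hZd2&_&_&rE2&rF2&rG2).
  assert (eX1 := split_ser (n+1) X1 ltac:(lia) hXd1). replace (n+1-1)%nat with n in eX1 by lia.
  assert (eY1 := split_ser (n-1) Y1 ltac:(lia) hYd1). replace (n-1-1)%nat with (n-2)%nat in eY1 by lia.
  assert (eZ1 := split_ser n Z1 ltac:(lia) hZd1).
  assert (eX2 := split_ser (n+1) X2 ltac:(lia) hXd2). replace (n+1-1)%nat with n in eX2 by lia.
  assert (eY2 := split_ser (n-1) Y2 ltac:(lia) hYd2). replace (n-1-1)%nat with (n-2)%nat in eY2 by lia.
  assert (eZ2 := split_ser n Z2 ltac:(lia) hZd2).
  rewrite eTX in eX2. rewrite eTY in eY2. rewrite eTZ in eZ2.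
  rewrite eTX in LX2. rewrite eTY in LY2. rewrite eTZ in LZ2.
  set (TX := trunc n X1) in *. set (TY := trunc (n-2) Y1) in *. set (TZ := trunc (n-1) Z1) in *.
  assert (o1 := order_diag (n+1) X1). assert (o2 := order_diag (n-1) Y1). assert (o3 := order_diag n Z1).
  assert (o4 := order_diag (n+1) X2). assert (o5 := order_diag (n-1) Y2). assert (o6 := order_diag n Z2).
  assert (HL : forall k, (k <= n)%nat ->
    EQE n a20 a11 (fun i => xo n (diag (n+1) X1) i - xo n (diag (n+1) X2) i)
        (fun i => yo n (diag (n-1) Y1) i - yo n (diag (n-1) Y2) i)
        (fun i => zo n (diag n Z1) i - zo n (diag n Z2) i) k = 0 /\
    EQF n a20 a11 a02 (fun i => xo n (diag (n+1) X1) i - xo n (diag (n+1) X2) i)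
        (fun i => yo n (diag (n-1) Y1) i - yo n (diag (n-1) Y2) i)
        (fun i => zo n (diag n Z1) i - zo n (diag n Z2) i) k = 0 /\
    EQG n a11 a02 (fun i => xo n (diag (n+1) X1) i - xo n (diag (n+1) X2) i)
        (fun i => yo n (diag (n-1) Y1) i - yo n (diag (n-1) Y2) i)
        (fun i => zo n (diag n Z1) i - zo n (diag n Z2) i) k = 0).
  { intros k Hk. rewrite EQE_sub, EQF_sub, EQG_sub.
    pose proof (rE1 k (n-k)%nat ltac:(lia)) as A1. pose proof (rE2 k (n-k)%nat ltac:(lia)) as A2.
    pose proof (rF1 k (n-k)%nat ltac:(lia)) as B1. pose proof (rF2 k (n-k)%nat ltac:(lia)) as B2.
    pose proof (rG1 k (n-k)%nat ltac:(lia)) as C1. pose proof (rG2 k (n-k)%nat ltac:(lia)) as C2.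
    rewrite eX1, eY1, eZ1 in A1, B1, C1. rewrite eX2, eY2, eZ2 in A2, B2, C2.
    rewrite dE in A1, A2 by auto. rewrite dF in B1, B2 by auto. rewrite dG in C1, C2 by auto.
    repeat split; lra. }
  destruct (lin_zero n a20 a11 a02 Hn Ha _ _ _ HL) as (Hx&Hy&Hz).
  intros k l. rewrite eX1, eX2, eY1, eY2, eZ1, eZ2. unfold ser_add.
  repeat split; f_equal.
  - unfold diag. destruct (Nat.eqb_spec (k+l) (n+1)); [|reflexivity].
    specialize (Hx k ltac:(lia)). unfold xo, diag in Hx.
    replace (n + 1 - k)%nat with l in Hx by lia.
    destruct (Nat.eqb_spec (k+l) (n+1)); [lra|lia].
  - unfold diag. destruct (Nat.eqb_spec (k+l) (n-1)); [|reflexivity].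
    specialize (Hy k ltac:(lia)). unfold yo, diag in Hy.
    replace (n - 1 - k)%nat with l in Hy by lia.
    destruct (Nat.eqb_spec (k+l) (n-1)); [lra|lia].
  - unfold diag. destruct (Nat.eqb_spec (k+l) n); [|reflexivity].
    specialize (Hz k ltac:(lia)). unfold zo, diag in Hz.
    replace (n - k)%nat with l in Hz by lia.
    destruct (Nat.eqb_spec (k+l) n); [lra|lia].
Qed.

Lemma step_exists n : (3 <= n)%nat -> (exists X Y Z, sol E F G b m (n-1) X Y Z) ->
  exists X Y Z, sol E F G b m n X Y Z.
Proof.
  intros Hn [X0 [Y0 [Z0 S0]]].
  pose proof (base_low E F G a20 a11 a02 Ha HN b m (n-1) X0 Y0 Z0 ltac:(lia) S0) as (LX&LY&LZ).
  destruct S0 as (hX00&hX10&hX01&hXd&hY00&hYd&hZl&hZd&hY01&hZ02&rE&rF&rG).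
  replace (n - 1 + 1)%nat with n in rE, rF, rG, hXd by lia.
  destruct (lin_exists n a20 a11 a02 Hn Ha (fun k => resE E b m X0 Y0 Z0 k (n-k)%nat / 2)
     (fun k => resF F b m X0 Y0 Z0 k (n-k)%nat) (fun k => resG G b m X0 Y0 Z0 k (n-k)%nat / 2))
    as (x&y&z&Hxyz).
  set (dX := dg (n+1) x). set (dY := dg (n-1) y). set (dZ := dg n z).
  assert (oX := order_dg (n+1) x). assert (oY := order_dg (n-1) y). assert (oZ := order_dg n z).
  fold dX in oX. fold dY in oY. fold dZ in oZ.
  assert (HEQ : forall k, (k <= n)%nat ->
    EQE n a20 a11 (xo n dX) (yo n dY) (zo n dZ) k = EQE n a20 a11 x y z k /\
    EQF n a20 a11 a02 (xo n dX) (yo n dY) (zo n dZ) k = EQF n a20 a11 a02 x y z k /\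
    EQG n a11 a02 (xo n dX) (yo n dY) (zo n dZ) k = EQG n a11 a02 x y z k).
  { apply (EQ_ext a20 a11 a02 n Hn).
    - intros i Hi. unfold xo, dX. apply dg_in. lia.
    - intros i Hi. unfold yo, dY. apply dg_in. lia.
    - intros i Hi. unfold zo, dZ. apply dg_in. lia. }
  exists (ser_add X0 dX), (ser_add Y0 dY), (ser_add Z0 dZ).
  unfold sol; repeat split.
  - unfold ser_add. rewrite hX00, (dg_out (n+1) x) by lia. ring.
  - unfold ser_add. rewrite hX10, (dg_out (n+1) x) by lia. ring.
  - unfold ser_add. rewrite hX01, (dg_out (n+1) x) by lia. ring.
  - unfold ser_add. intros k l H. rewrite hXd, (dg_out (n+1) x) by lia. ring.
  - unfold ser_add. rewrite hY00, (dg_out (n-1) y) by lia. ring.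
  - unfold ser_add. intros k l H. rewrite hYd, (dg_out (n-1) y) by lia. ring.
  - unfold ser_add. intros k l H. rewrite hZl, (dg_out n z) by lia. ring.
  - unfold ser_add. intros k l H. rewrite hZd, (dg_out n z) by lia. ring.
  - unfold ser_add. rewrite (dg_out (n-1) y) by lia. lra.
  - unfold ser_add. rewrite (dg_out n z) by lia. lra.
  - intros k l H.
    destruct (Nat.lt_ge_cases (k+l) n).
    + rewrite (step0E E a20 a11 a02 b m n Hn _ _ _ _ _ _ LX LY LZ oX oY oZ) by lia. apply rE; lia.
    + replace l with (n-k)%nat by lia. rewrite dE by (auto; lia).
      destruct (HEQ k ltac:(lia)) as (e1&_&_). destruct (Hxyz k ltac:(lia)) as (e2&_&_).
      rewrite e1, e2. lra.
  - intros k l H.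
    destruct (Nat.lt_ge_cases (k+l) n).
    + rewrite (step0F F a20 a11 a02 b m n Hn _ _ _ _ _ _ LX LY LZ oX oY oZ) by lia. apply rF; lia.
    + replace l with (n-k)%nat by lia. rewrite dF by (auto; lia).
      destruct (HEQ k ltac:(lia)) as (_&e1&_). destruct (Hxyz k ltac:(lia)) as (_&e2&_).
      rewrite e1, e2. lra.
  - intros k l H.
    destruct (Nat.lt_ge_cases (k+l) n).
    + rewrite (step0G G a20 a11 a02 b m n Hn _ _ _ _ _ _ LX LY LZ oX oY oZ) by lia. apply rG; lia.
    + replace l with (n-k)%nat by lia. rewrite dG by (auto; lia).
      destruct (HEQ k ltac:(lia)) as (_&_&e1). destruct (Hxyz k ltac:(lia)) as (_&_&e2).
      rewrite e1, e2. lra.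
Qed.

Lemma base_unique X Y Z : sol E F G b m 2 X Y Z ->
  forall k l, X k l = su k l /\ Y k l = sv k l /\ Z k l = Z2 a20 a11 a02 k l.
Proof.
  intro S0.
  pose proof (base_low E F G a20 a11 a02 Ha HN b m 2 X Y Z ltac:(lia) S0) as (LX&LY&LZ).
  destruct S0 as (hX00&hX10&hX01&hXd&hY00&hYd&hZl&hZd&hY01&hZ02&rE&rF&rG).
  destruct (nvals E F G a20 a11 a02 HN) as (e1&e2&e3&e4&e5&e6&f1&f2&f3&f4&f5&f6&g1&g2&g3&g4&g5&g6).
  assert (gX : forall k l, (k + l < 3)%nat -> X k l = su k l).
  { intros k l H. specialize (LX k l H). unfold ser_sub in LX. lra. }
  assert (gY : forall k l, (k + l < 2)%nat -> Y k l = sv k l).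
  { intros k l H. specialize (LY k l H). unfold ser_sub in LY. lra. }
  assert (gZ : forall k l, (k + l < 3)%nat -> Z k l = Z2 a20 a11 a02 k l).
  { intros k l H. specialize (LZ k l H). unfold ser_sub in LZ. lra. }
  assert (x20 := gX 2%nat 0%nat ltac:(lia)). assert (x11 := gX 1%nat 1%nat ltac:(lia)).
  assert (x02 := gX 0%nat 2%nat ltac:(lia)).
  assert (y10 := gY 1%nat 0%nat ltac:(lia)). assert (y01 := gY 0%nat 1%nat ltac:(lia)).
  assert (z20 := gZ 2%nat 0%nat ltac:(lia)). assert (z11 := gZ 1%nat 1%nat ltac:(lia)).
  assert (z02 := gZ 0%nat 2%nat ltac:(lia)).
  simpl in x20, x11, x02, y10, y01, z20, z11, z02.
  assert (R1 := rE 2%nat 0%nat ltac:(lia)). rewrite rE20 in R1 by auto.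
  assert (R2 := rE 1%nat 1%nat ltac:(lia)). rewrite rE11 in R2 by auto.
  assert (R3 := rE 0%nat 2%nat ltac:(lia)). rewrite rE02 in R3 by auto.
  assert (R4 := rF 0%nat 2%nat ltac:(lia)). rewrite rF02 in R4 by auto.
  rewrite e4, x20, y10, z20 in R1. rewrite e5, x20, x11, y10, y01, z20, z11 in R2.
  rewrite e6, x11, y01, z11 in R3. rewrite f6, x11, x02, z11, z02 in R4.
  intros k l. split; [|split].
  - destruct (Nat.lt_ge_cases (k+l) 3); [auto|].
    destruct (Nat.eq_dec (k+l) 3) as [H3|H3].
    + destruct k as [|[|[|[|k]]]]; [replace l with 3%nat by lia| replace l with 2%nat by lia
        | replace l with 1%nat by lia | replace l with 0%nat by lia | lia]; simpl; lra.
    + rewrite hXd by lia. unfold su, lin. destruct k as [|[|k]]; destruct l as [|[|l]]; try lia; reflexivity.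
  - destruct (Nat.lt_ge_cases (k+l) 2); [auto|].
    rewrite hYd by lia. unfold sv, lin. destruct k as [|[|k]]; destruct l as [|[|l]]; try lia; reflexivity.
  - destruct (Nat.lt_ge_cases (k+l) 3); [auto|].
    rewrite hZd by lia. unfold Z2. destruct k as [|[|[|k]]]; destruct l as [|[|[|l]]]; try lia; reflexivity.
Qed.

Lemma claim n : (2 <= n)%nat -> (exists X Y Z, sol E F G b m n X Y Z) /\ uniq n.
Proof.
  induction n as [|n IH]; intro Hn; [lia|].
  destruct (Nat.eq_dec n 1) as [->|Hn1].
  - split.
    + exists su, sv, (Z2 a20 a11 a02). apply base_exists; auto.
    + intros X Y Z X' Y' Z' S1 S2 k l.
      destruct (base_unique _ _ _ S1 k l) as (a1&a2&a3).
      destruct (base_unique _ _ _ S2 k l) as (c1&c2&c3).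
      repeat split; congruence.
  - destruct (IH ltac:(lia)) as [He Hu]. split.
    + apply step_exists; [lia|]. replace (S n - 1)%nat with n by lia. exact He.
    + apply step_unique; [lia|]. replace (S n - 1)%nat with n by lia. exact Hu.
Qed.
End Main.

Theorem mainTheorem5 :
  forall (E F G : ser) (a20 a11 a02 : R),
    0 < a02 ->
    normalized E F G a20 a11 a02 ->
    forall (b : nat -> R) (m : nat), (2 <= m)%nat ->
      exists X Y Z : ser,
        formal_solution E F G b m X Y Z /\
        forall X' Y' Z' : ser, formal_solution E F G b m X' Y' Z' ->
          forall k l : nat, X' k l = X k l /\ Y' k l = Y k l /\ Z' k l = Z k l.
Proof.
  intros E F G a20 a11 a02 Ha HN b m Hm.
  destruct (claim E F G a20 a11 a02 Ha HN b m m Hm) as [[X [Y [Z HS]]] Hu].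
  exists X, Y, Z. split.
  - apply fs_sol; exact HS.
  - intros X' Y' Z' H. apply (Hu X Y Z X' Y' Z' HS). apply fs_sol; exact H.
Qed.
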